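(* Let $f(z)=z\big(1+\sum_{n\ge1}c_nz^n\big)$ be holomorphic and univalent in the unit disc and let $\Lambda_p$ ($p\ge0$) be as defined in the context. Define polynomials $F_n(w)$ ($n\ge0$) by $$\frac{zf'(z)}{f(z)-wf(z)^2}=1+\sum_{n\ge1}F_n(w)z^n,\qquad F_0(w)=1,$$ (these are the Faber polynomials of $h(z)=1/f(1/z)$), define $T_n(w)$ by $$\frac{zf'(z)^2}{f(z)-wf(z)^2}=1+\sum_{n\ge1}T_n(w)z^n,\qquad T_0(w)=1,$$ and define constants $a_p^p$ by $$\frac{z^2f'(z)^2}{f(z)^2}=1+\sum_{p\ge1}a_p^pz^p.$$ Then: (1) for every $p\ge1$, $T_{p-1}(w)=F_{p-1}(w)+2c_1F_{p-2}(w)+3c_2F_{p-3}(w)+\cdots+(p-1)c_{p-2}F_1(w)+pc_{p-1}$; (2) for every $p\ge1$ and $u\neq0$, $\Lambda_p(u)+a_p^p\,u=-T_{p-1}(1/u)$; (3) for every fixed $u\neq0$, in a neighborhood of $\xi=0$, $$\frac{\xi^2f'(\xi)^2}{f(\xi)^2}\,\frac{u^2}{f(\xi)-u}=\sum_{p\ge0}\Lambda_p(u)\,\xi^p.$$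
   Context: For $p\ge0$, $\Lambda_p$ denotes the unique function of the form $\Lambda_p(u)=-u^{1-p}+\sum_{j=0}^{p-1}\alpha_ju^{1-j}$ (constants $\alpha_j$ depending on $f$) such that the Laurent expansion at $z=0$ of $z^{1-p}f'(z)+\Lambda_p(f(z))$ contains only powers $z^n$ with $n\ge2$. In particular $\Lambda_0(u)=-u$. *)

(* Defs.v *)
From Stdlib Require Import Reals ZArith.
Open Scope R_scope.

Record Cplx := mkC { Re : R; Im : R }.
Definition C0 : Cplx := mkC 0 0.
Definition C1 : Cplx := mkC 1 0.
Definition RtoC (x : R) : Cplx := mkC x 0.
Definition Cadd (a b : Cplx) : Cplx := mkC (Re a + Re b) (Im a + Im b).
Definition Copp (a : Cplx) : Cplx := mkC (- Re a) (- Im a).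
Definition Csub (a b : Cplx) : Cplx := Cadd a (Copp b).
Definition Cmul (a b : Cplx) : Cplx :=
  mkC (Re a * Re b - Im a * Im b) (Re a * Im b + Im a * Re b).
Definition Cinv (a : Cplx) : Cplx :=
  let d := Re a * Re a + Im a * Im a in mkC (Re a / d) (- Im a / d).
Definition Cdiv (a b : Cplx) : Cplx := Cmul a (Cinv b).
Definition Cnorm (a : Cplx) : R := sqrt (Re a * Re a + Im a * Im a).
Fixpoint Cpow (z : Cplx) (n : nat) : Cplx :=
  match n with O => C1 | S m => Cmul z (Cpow z m) end.
Definition Czpow (z : Cplx) (k : Z) : Cplx :=
  match k with
  | Z0 => C1
  | Zpos q => Cpow z (Pos.to_nat q)
  | Zneg q => Cinv (Cpow z (Pos.to_nat q))
  end.
Fixpoint Csum (a : nat -> Cplx) (n : nat) : Cplx :=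
  match n with O => C0 | S m => Cadd (Csum a m) (a m) end.

Definition Cseries_to (a : nat -> Cplx) (s : Cplx) : Prop :=
  forall eps, 0 < eps -> exists N : nat, forall n, (N <= n)%nat ->
    Cnorm (Csub (Csum a n) s) < eps.

Definition Cderiv_at (f : Cplx -> Cplx) (z l : Cplx) : Prop :=
  forall eps, 0 < eps -> exists delta, 0 < delta /\
    forall h, 0 < Cnorm h < delta ->
      Cnorm (Csub (Cdiv (Csub (f (Cadd z h)) (f z)) h) l) < eps.

Definition FPS := nat -> Cplx.
Definition fone : FPS := fun n => match n with O => C1 | _ => C0 end.
Definition fX : FPS := fun n => match n with 1%nat => C1 | _ => C0 end.
Definition fadd (a b : FPS) : FPS := fun n => Cadd (a n) (b n).
Definition fsub (a b : FPS) : FPS := fun n => Csub (a n) (b n).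
Definition fscale (w : Cplx) (a : FPS) : FPS := fun n => Cmul w (a n).
Definition fmul (a b : FPS) : FPS :=
  fun n => Csum (fun k => Cmul (a k) (b (n - k)%nat)) (S n).
Fixpoint fpow (a : FPS) (k : nat) : FPS :=
  match k with O => fone | S m => fmul a (fpow a m) end.
(* inverse of a series with constant term 1:  1/a = sum_k (1-a)^k *)
Definition finv (a : FPS) : FPS :=
  fun n => Csum (fun k => fpow (fsub fone a) k n) (S n).
Definition fderiv (a : FPS) : FPS :=
  fun n => Cmul (RtoC (INR (S n))) (a (S n)).

(* g = 1 + sum_{n>=1} c_n z^n  (c 0 is ignored) *)
Definition gser (c : nat -> Cplx) : FPS :=
  fun n => match n with O => C1 | _ => c n end.
(* f = z g *)
Definition fser (c : nat -> Cplx) : FPS :=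
  fun n => match n with O => C0 | S m => gser c m end.
Definition fpser (c : nat -> Cplx) : FPS := fderiv (fser c).

(* (f - w f^2)/z = g (1 - w z g) *)
Definition denom (c : nat -> Cplx) (w : Cplx) : FPS :=
  fmul (gser c) (fsub fone (fscale w (fmul fX (gser c)))).

(* z f'/(f - w f^2) = f' / (g (1 - w z g)) = 1 + sum F_n(w) z^n *)
Definition Fpoly (c : nat -> Cplx) (n : nat) (w : Cplx) : Cplx :=
  fmul (fpser c) (finv (denom c w)) n.
(* z f'^2/(f - w f^2) = f'^2 / (g (1 - w z g)) = 1 + sum T_n(w) z^n *)
Definition Tpoly (c : nat -> Cplx) (n : nat) (w : Cplx) : Cplx :=
  fmul (fmul (fpser c) (fpser c)) (finv (denom c w)) n.
(* z^2 f'^2 / f^2 = f'^2 / g^2 = 1 + sum a_p^p z^p *)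
Definition acoef (c : nat -> Cplx) (p : nat) : Cplx :=
  fmul (fmul (fpser c) (fpser c)) (finv (fmul (gser c) (gser c))) p.

Definition gpowZ (c : nat -> Cplx) (k : Z) : FPS :=
  match k with
  | Z0 => fone
  | Zpos q => fpow (gser c) (Pos.to_nat q)
  | Zneg q => fpow (finv (gser c)) (Pos.to_nat q)
  end.
(* coefficient of z^n in the Laurent series z^m * s *)
Definition lc (m : Z) (s : FPS) (n : Z) : Cplx :=
  if (0 <=? n - m)%Z then s (Z.to_nat (n - m)) else C0.

(* al j (j < p) are the constants alpha_j of Lambda_p, i.e. the Laurent
   expansion of  z^{1-p} f'(z) - f(z)^{1-p} + sum_{j<p} alpha_j f(z)^{1-j}
   (with f^k = z^k g^k) has no term z^n with n <= 1. *)
Definition lam_spec (c : nat -> Cplx) (p : nat) (al : nat -> Cplx) : Prop :=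
  forall n : Z, (n <= 1)%Z ->
    Cadd (Csub (lc (1 - Z.of_nat p) (fpser c) n)
               (lc (1 - Z.of_nat p) (gpowZ c (1 - Z.of_nat p)) n))
         (Csum (fun j => Cmul (al j)
                  (lc (1 - Z.of_nat j) (gpowZ c (1 - Z.of_nat j)) n)) p)
    = C0.

Definition Lambda (p : nat) (al : nat -> Cplx) (u : Cplx) : Cplx :=
  Cadd (Copp (Czpow u (1 - Z.of_nat p)))
       (Csum (fun j => Cmul (al j) (Czpow u (1 - Z.of_nat j))) p).

(* Main.v *)
Require Import Defs.
From Stdlib Require Import Reals ZArith.
From Stdlib Require Import Lra Lia Psatz FunctionalExtensionality.
Require Import Defs.
Open Scope R_scope.

Lemma Ceq : forall a b : Cplx, Re a = Re b -> Im a = Im b -> a = b.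
Proof. intros [a1 a2] [b1 b2]; simpl; intros -> ->; reflexivity. Qed.

Lemma Cring : ring_theory C0 C1 Cadd Cmul Csub Copp (@eq Cplx).
Proof.
  constructor; intros; apply Ceq; destruct x; try destruct y; try destruct z;
  simpl; ring.
Qed.
Add Ring Cring : Cring.

Lemma C1_neq_C0 : C1 <> C0.
Proof. intro H. injection H. lra. Qed.

Lemma Cinv_l : forall p, p <> C0 -> Cmul (Cinv p) p = C1.
Proof.
  intros [a b] H. assert (a*a+b*b <> 0).
  { intro E. apply H. assert (a = 0) by nra. assert (b=0) by nra. subst; reflexivity. }
  apply Ceq; simpl; field; auto.
Qed.

Lemma Cfield : field_theory C0 C1 Cadd Cmul Csub Copp Cdiv Cinv (@eq Cplx).
Proof.
  constructor. exact Cring. exact C1_neq_C0. reflexivity. exact Cinv_l.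
Qed.
Add Field Cfield : Cfield.

Lemma Cpow_S : forall z n, Cpow z (S n) = Cmul z (Cpow z n).
Proof. reflexivity. Qed.

Lemma Cpow_add : forall z m n, Cpow z (m + n) = Cmul (Cpow z m) (Cpow z n).
Proof. intros z m n; induction m; simpl; [ring| rewrite IHm; ring]. Qed.

Lemma Cpow_mul_l : forall a b n, Cpow (Cmul a b) n = Cmul (Cpow a n) (Cpow b n).
Proof. intros a b n; induction n; simpl; [ring| rewrite IHn; ring]. Qed.

Lemma Cpow_C1 : forall n, Cpow C1 n = C1.
Proof. induction n; simpl; [ring|rewrite IHn; ring]. Qed.

Lemma Cinv_pow : forall u n, u <> C0 -> Cpow (Cinv u) n = Cinv (Cpow u n).
Proof.
  intros u n Hu. induction n; simpl.
  - apply Ceq; simpl; field. 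
  - rewrite IHn. assert (Cpow u n <> C0).
    { clear IHn; induction n; simpl. apply C1_neq_C0. intro E.
      apply IHn. assert (Cmul (Cinv u) (Cmul u (Cpow u n)) = C0) by (rewrite E; ring).
      rewrite <- H. field. auto. }
    field. split; auto.
Qed.

Lemma Cpow_nz : forall u n, u <> C0 -> Cpow u n <> C0.
Proof.
  intros u n Hu; induction n; simpl. apply C1_neq_C0. intro E.
  apply IHn. assert (Cmul (Cinv u) (Cmul u (Cpow u n)) = C0) by (rewrite E; ring).
  rewrite <- H. field. auto.
Qed.

Lemma RtoC_mul : forall x y, RtoC (x*y) = Cmul (RtoC x) (RtoC y).
Proof. intros; apply Ceq; simpl; ring. Qed.
Lemma RtoC_add : forall x y, RtoC (x+y) = Cadd (RtoC x) (RtoC y).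
Proof. intros; apply Ceq; simpl; ring. Qed.
Lemma RtoC_1 : RtoC 1 = C1. Proof. reflexivity. Qed.
Lemma RtoC_0 : RtoC 0 = C0. Proof. reflexivity. Qed.

Lemma Csum_ext : forall a b n, (forall k, (k < n)%nat -> a k = b k) -> Csum a n = Csum b n.
Proof.
  intros a b n H; induction n; simpl; auto.
  rewrite IHn by (intros; apply H; lia). rewrite H by lia; reflexivity.
Qed.

Lemma Csum_add : forall a b n, Csum (fun k => Cadd (a k) (b k)) n = Cadd (Csum a n) (Csum b n).
Proof. intros a b n; induction n; simpl; [ring|rewrite IHn; ring]. Qed.

Lemma Csum_sub : forall a b n, Csum (fun k => Csub (a k) (b k)) n = Csub (Csum a n) (Csum b n).
Proof. intros a b n; induction n; simpl; [ring|rewrite IHn; ring]. Qed.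

Lemma Csum_opp : forall a n, Csum (fun k => Copp (a k)) n = Copp (Csum a n).
Proof. intros a n; induction n; simpl; [ring|rewrite IHn; ring]. Qed.

Lemma Csum_mul_l : forall c a n, Csum (fun k => Cmul c (a k)) n = Cmul c (Csum a n).
Proof. intros c a n; induction n; simpl; [ring|rewrite IHn; ring]. Qed.

Lemma Csum_mul_r : forall c a n, Csum (fun k => Cmul (a k) c) n = Cmul (Csum a n) c.
Proof. intros c a n; induction n; simpl; [ring|rewrite IHn; ring]. Qed.

Lemma Csum_zero : forall a n, (forall k, (k < n)%nat -> a k = C0) -> Csum a n = C0.
Proof.
  intros a n H; induction n; simpl; auto.
  rewrite IHn by (intros; apply H; lia). rewrite H by lia; ring.
Qed.

Lemma Csum_first : forall a n, Csum a (S n) = Cadd (a O) (Csum (fun k => a (S k)) n).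
Proof.
  intros a n; induction n. simpl; ring.
  change (Csum a (S (S n))) with (Cadd (Csum a (S n)) (a (S n))).
  rewrite IHn. simpl. ring.
Qed.

Lemma Csum_plus : forall a m n, Csum a (m + n) = Cadd (Csum a m) (Csum (fun k => a (m + k)%nat) n).
Proof.
  intros a m n; induction n. simpl. rewrite Nat.add_0_r; ring.
  rewrite Nat.add_succ_r. simpl. rewrite IHn. ring.
Qed.

Lemma Csum_rev : forall n a, Csum a n = Csum (fun k => a (n - 1 - k)%nat) n.
Proof.
  induction n; intros a. reflexivity.
  rewrite Csum_first. rewrite (IHn (fun k => a (S k))).
  change (Csum (fun k => a (S n - 1 - k)%nat) (S n)) with
    (Cadd (Csum (fun k => a (S n - 1 - k)%nat) n) (a (S n - 1 - n)%nat)).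
  replace (S n - 1 - n)%nat with O by lia.
  rewrite Cring.(Radd_comm). f_equal. apply Csum_ext. intros k Hk. f_equal. lia.
Qed.

Lemma Csum_swap : forall (a : nat -> nat -> Cplx) n m,
  Csum (fun i => Csum (fun j => a i j) m) n = Csum (fun j => Csum (fun i => a i j) n) m.
Proof.
  intros a n m; induction n; simpl.
  - symmetry; apply Csum_zero; intros; reflexivity.
  - rewrite IHn. rewrite <- Csum_add. reflexivity.
Qed.

Lemma Csum_single : forall a n i, (i < n)%nat -> (forall k, (k < n)%nat -> k <> i -> a k = C0) ->
  Csum a n = a i.
Proof.
  intros a n i Hi H. induction n. lia.
  simpl. destruct (Nat.eq_dec i n).
  - subst. rewrite Csum_zero. ring. intros; apply H; lia.
  - rewrite IHn by (try lia; intros; apply H; lia). rewrite (H n) by lia. ring.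
Qed.


Lemma triangle : forall (F : nat -> nat -> Cplx) n,
  Csum (fun i => Csum (fun k => F k i) (S i)) (S n) =
  Csum (fun k => Csum (fun j => F k (k + j)%nat) (S (n - k))) (S n).
Proof.
  intros F n; induction n.
  - simpl. reflexivity.
  - change (Csum (fun i => Csum (fun k => F k i) (S i)) (S (S n))) with
      (Cadd (Csum (fun i => Csum (fun k => F k i) (S i)) (S n)) (Csum (fun k => F k (S n)) (S (S n)))).
    rewrite IHn.
    change (Csum (fun k => Csum (fun j => F k (k + j)%nat) (S (S n - k))) (S (S n))) with
      (Cadd (Csum (fun k => Csum (fun j => F k (k + j)%nat) (S (S n - k))) (S n))
            (Csum (fun j => F (S n) (S n + j)%nat) (S (S n - S n)))).
    rewrite (Csum_ext (fun k => Csum (fun j => F k (k + j)%nat) (S (S n - k)))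
                      (fun k => Cadd (Csum (fun j => F k (k + j)%nat) (S (n - k))) (F k (S n)))).
    2:{ intros k Hk. replace (S n - k)%nat with (S (n - k)) by lia.
        change (Csum (fun j => F k (k + j)%nat) (S (S (n - k)))) with
          (Cadd (Csum (fun j => F k (k + j)%nat) (S (n - k))) (F k (k + S (n - k))%nat)).
        replace (k + S (n - k))%nat with (S n) by lia. reflexivity. }
    rewrite Csum_add. replace (S n - S n)%nat with O by lia.
    assert (Csum (fun j => F (S n) (S n + j)%nat) 1 = F (S n) (S n)) as ->
      by (simpl; rewrite Nat.add_0_r; ring).
    change (Csum (fun k => F k (S n)) (S (S n))) with
      (Cadd (Csum (fun k => F k (S n)) (S n)) (F (S n) (S n))). ring.
Qed.

Lemma fmul_comm : forall a b, fmul a b = fmul b a.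
Proof.
  intros a b; apply functional_extensionality; intro n; unfold fmul.
  rewrite Csum_rev. apply Csum_ext. intros k Hk.
  replace (S n - 1 - k)%nat with (n - k)%nat by lia.
  replace (n - (n - k))%nat with k by lia. ring.
Qed.

Lemma fmul_assoc : forall a b c, fmul (fmul a b) c = fmul a (fmul b c).
Proof.
  intros a b c; apply functional_extensionality; intro n; unfold fmul.
  transitivity (Csum (fun i => Csum (fun k => Cmul (Cmul (a k) (b (i - k)%nat)) (c (n - i)%nat)) (S i)) (S n)).
  { apply Csum_ext; intros i Hi. rewrite <- Csum_mul_r. reflexivity. }
  rewrite (triangle (fun k i => Cmul (Cmul (a k) (b (i - k)%nat)) (c (n - i)%nat))).
  apply Csum_ext; intros k Hk. rewrite <- Csum_mul_l. apply Csum_ext; intros j Hj.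
  replace (k + j - k)%nat with j by lia. replace (n - (k+j))%nat with (n - k - j)%nat by lia. ring.
Qed.

Lemma fmul_fone_l : forall a, fmul fone a = a.
Proof.
  intros a; apply functional_extensionality; intro n; unfold fmul.
  rewrite (Csum_single _ _ O) by (first [lia | intros k _ Hk; destruct k; [lia|simpl; ring]]).
  simpl. rewrite Nat.sub_0_r. ring.
Qed.

Lemma fmul_fone_r : forall a, fmul a fone = a.
Proof. intros; rewrite fmul_comm; apply fmul_fone_l. Qed.

Lemma fmul_fadd_l : forall a b c, fmul (fadd a b) c = fadd (fmul a c) (fmul b c).
Proof.
  intros; apply functional_extensionality; intro n; unfold fmul, fadd.
  rewrite <- Csum_add. apply Csum_ext; intros; ring.
Qed.
Lemma fmul_fadd_r : forall a b c, fmul c (fadd a b) = fadd (fmul c a) (fmul c b).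
Proof. intros; rewrite !(fmul_comm c); apply fmul_fadd_l. Qed.
Lemma fmul_fsub_l : forall a b c, fmul (fsub a b) c = fsub (fmul a c) (fmul b c).
Proof.
  intros; apply functional_extensionality; intro n; unfold fmul, fsub.
  rewrite <- Csum_sub. apply Csum_ext; intros; ring.
Qed.
Lemma fmul_fsub_r : forall a b c, fmul c (fsub a b) = fsub (fmul c a) (fmul c b).
Proof. intros; rewrite !(fmul_comm c); apply fmul_fsub_l. Qed.
Lemma fmul_fscale_l : forall w a b, fmul (fscale w a) b = fscale w (fmul a b).
Proof.
  intros; apply functional_extensionality; intro n; unfold fmul, fscale.
  rewrite <- Csum_mul_l. apply Csum_ext; intros; ring.
Qed.
Lemma fmul_fscale_r : forall w a b, fmul b (fscale w a) = fscale w (fmul b a).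
Proof. intros; rewrite !(fmul_comm b); apply fmul_fscale_l. Qed.

Lemma fmul_low : forall a a' b b' n,
  (forall m, (m <= n)%nat -> a m = a' m) -> (forall m, (m <= n)%nat -> b m = b' m) ->
  fmul a b n = fmul a' b' n.
Proof.
  intros a a' b b' n Ha Hb; unfold fmul. apply Csum_ext; intros k Hk.
  rewrite Ha, Hb by lia. reflexivity.
Qed.

Definition sh (k : nat) (s : FPS) : FPS := fun n => if (k <=? n)%nat then s (n - k)%nat else C0.

Lemma fmul_sh : forall k a b, fmul (sh k a) b = sh k (fmul a b).
Proof.
  intros k a b; apply functional_extensionality; intro n; unfold fmul, sh.
  destruct (Nat.leb_spec k n).
  - replace (S n) with (k + S (n - k))%nat by lia. rewrite Csum_plus.
    rewrite Csum_zero. 2:{ intros i Hi. destruct (Nat.leb_spec k i); [lia|ring]. }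
    rewrite Cring.(Radd_0_l). apply Csum_ext; intros i Hi.
    destruct (Nat.leb_spec k (k+i)); [|lia]. replace (k+i-k)%nat with i by lia.
    replace (n - (k+i))%nat with (n - k - i)%nat by lia. reflexivity.
  - apply Csum_zero. intros i Hi. destruct (Nat.leb_spec k i); [lia|ring].
Qed.

Lemma fmul_fX : forall s, fmul fX s = sh 1 s.
Proof.
  intros s; apply functional_extensionality; intro n; unfold fmul, sh, fX.
  destruct n.
  - simpl. ring.
  - rewrite (Csum_single _ _ 1) by (first [lia | intros k _ Hk; destruct k as [|[|k]]; simpl; try lia; ring]).
    simpl. rewrite Nat.sub_0_r. ring.
Qed.

Lemma sh_add : forall i j s, sh i (sh j s) = sh (i + j) s.
Proof.
  intros; apply functional_extensionality; intro n; unfold sh.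
  destruct (Nat.leb_spec i n); destruct (Nat.leb_spec (i+j) n);
  try destruct (Nat.leb_spec j (n - i)); try lia; try reflexivity.
  f_equal; lia.
Qed.

Lemma sh_0 : forall s, sh 0 s = s.
Proof. intros; apply functional_extensionality; intro n; unfold sh; simpl; f_equal; lia. Qed.

Lemma fpow_add : forall a m n, fpow a (m + n) = fmul (fpow a m) (fpow a n).
Proof.
  intros a m n; induction m; simpl. symmetry; apply fmul_fone_l.
  rewrite IHm, fmul_assoc; reflexivity.
Qed.

Lemma fpow_mul : forall a b n, fpow (fmul a b) n = fmul (fpow a n) (fpow b n).
Proof.
  intros a b n; induction n; simpl. symmetry; apply fmul_fone_l.
  rewrite IHn. rewrite !fmul_assoc. f_equal. rewrite <- !fmul_assoc. f_equal. apply fmul_comm.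
Qed.

Lemma fpow_S_r : forall a n, fpow a (S n) = fmul (fpow a n) a.
Proof. intros. replace (S n) with (n + 1)%nat by lia. rewrite fpow_add. simpl. rewrite fmul_fone_r. reflexivity. Qed.

Lemma fpow_fscale : forall w a n, fpow (fscale w a) n = fscale (Cpow w n) (fpow a n).
Proof.
  intros w a n; induction n; simpl.
  - apply functional_extensionality; intro m; unfold fscale; ring.
  - rewrite IHn, fmul_fscale_l, fmul_fscale_r. apply functional_extensionality; intro m; unfold fscale; ring.
Qed.

Lemma fpow_fone : forall n, fpow fone n = fone.
Proof. induction n; simpl; auto. rewrite IHn; apply fmul_fone_l. Qed.

Lemma fpow_sh : forall k a n, fpow (sh k a) n = sh (k * n) (fpow a n).
Proof.
  intros k a n; induction n; simpl.
  - rewrite Nat.mul_0_r, sh_0. reflexivity.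
  - rewrite IHn, fmul_sh, fmul_comm, fmul_sh, sh_add, fmul_comm. f_equal. lia.
Qed.

Lemma fpow_val : forall a k n, a O = C0 -> (n < k)%nat -> fpow a k n = C0.
Proof.
  intros a k; induction k; intros n Ha Hn. lia.
  simpl. unfold fmul. apply Csum_zero. intros i Hi. destruct i.
  - rewrite Ha; ring.
  - rewrite IHk by (auto; lia). ring.
Qed.

Lemma fpow_0_coef : forall a k, a O = C1 -> fpow a k O = C1.
Proof.
  intros a k Ha; induction k; simpl. reflexivity. unfold fmul. simpl. rewrite Ha, IHk; ring.
Qed.

Lemma fmul_0 : forall a b, fmul a b O = Cmul (a O) (b O).
Proof. intros; unfold fmul; simpl; ring. Qed.

Lemma finv_0 : forall a, finv a O = C1.
Proof. intros; unfold finv; simpl; ring. Qed.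

Definition fps_part (b : FPS) (N : nat) : FPS := fun n => Csum (fun k => fpow b k n) N.

Lemma fps_part_geo : forall b N, fmul (fsub fone b) (fps_part b N) = fsub fone (fpow b N).
Proof.
  intros b N; induction N.
  - apply functional_extensionality; intro n; unfold fmul, fps_part, fsub; simpl.
    rewrite Csum_zero by (intros; ring). destruct n; ring.
  - assert (fps_part b (S N) = fadd (fps_part b N) (fpow b N)) as E
      by (apply functional_extensionality; intro; reflexivity).
    rewrite E, fmul_fadd_r, IHN, fmul_fsub_l, fmul_fone_l.
    apply functional_extensionality; intro n; unfold fadd, fsub; simpl. ring.
Qed.

Lemma finv_spec : forall a, a O = C1 -> fmul a (finv a) = fone.
Proof.
  intros a Ha. apply functional_extensionality; intro n.
  set (b := fsub fone a).
  assert (Hb0 : b O = C0) by (unfold b, fsub; rewrite Ha; simpl; ring).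
  assert (a = fsub fone b) as Ea by (apply functional_extensionality; intro m; unfold b, fsub; ring).
  transitivity (fmul (fsub fone b) (fps_part b (S n)) n).
  - rewrite <- Ea. apply fmul_low; auto. intros m Hm. unfold finv, fps_part.
    fold b. replace (S n) with (S m + (n - m))%nat by lia. rewrite Csum_plus.
    rewrite (Csum_zero (fun k => fpow b (S m + k) m)). ring.
    intros k _. apply fpow_val; auto; lia.
  - rewrite fps_part_geo. unfold fsub. rewrite fpow_val by (auto; lia). ring.
Qed.

Lemma finv_unique : forall a b, a O = C1 -> fmul a b = fone -> b = finv a.
Proof.
  intros a b Ha H.
  rewrite <- (fmul_fone_r b), <- (finv_spec a Ha), <- fmul_assoc, (fmul_comm b), H, fmul_fone_l.
  reflexivity.
Qed.

Lemma finv_mul : forall a b, a O = C1 -> b O = C1 -> finv (fmul a b) = fmul (finv a) (finv b).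
Proof.
  intros a b Ha Hb. symmetry. apply finv_unique.
  rewrite fmul_0, Ha, Hb; ring.
  rewrite fmul_assoc, <- (fmul_assoc b), (fmul_comm b (finv a)), fmul_assoc, finv_spec, fmul_fone_r, finv_spec; auto.
Qed.


Definition fzero : FPS := fun _ => C0.
Definition fopp (a : FPS) : FPS := fun n => Copp (a n).
Definition fC (w : Cplx) : FPS := fun n => match n with O => w | _ => C0 end.

Ltac fext := apply functional_extensionality; intro.

Lemma fmul_fzero_l : forall a, fmul fzero a = fzero.
Proof. intros; fext; unfold fmul, fzero; apply Csum_zero; intros; ring. Qed.

Lemma FPSring : ring_theory fzero fone fadd fmul fsub fopp (@eq FPS).
Proof.
  constructor; intros.
  - fext; unfold fadd, fzero; ring.
  - fext; unfold fadd; ring.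
  - fext; unfold fadd; ring.
  - apply fmul_fone_l.
  - apply fmul_comm.
  - symmetry; apply fmul_assoc.
  - apply fmul_fadd_l.
  - reflexivity.
  - fext; unfold fadd, fopp, fzero; ring.
Qed.
Add Ring FPSring : FPSring.

Lemma fscale_fC : forall w a, fscale w a = fmul (fC w) a.
Proof.
  intros; fext; unfold fmul, fscale, fC. rewrite Csum_first.
  rewrite Csum_zero by (intros; ring). rewrite Nat.sub_0_r; ring.
Qed.

Lemma fC_mul : forall x y, fC (Cmul x y) = fmul (fC x) (fC y).
Proof.
  intros; fext; unfold fmul, fC. rewrite Csum_first.
  rewrite Csum_zero by (intros; ring). destruct x0; simpl; ring.
Qed.
Lemma fC_add : forall x y, fC (Cadd x y) = fadd (fC x) (fC y).
Proof. intros; fext; unfold fadd, fC; destruct x0; ring. Qed.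
Lemma fC_1 : fC C1 = fone. Proof. fext; unfold fC, fone; destruct x; ring. Qed.
Lemma fC_0 : fC C0 = fzero. Proof. fext; unfold fC, fzero; destruct x; ring. Qed.

Definition fsumS (F : nat -> FPS) (n : nat) : FPS := fun m => Csum (fun j => F j m) n.

Lemma fmul_fsumS_l : forall F n b, fmul (fsumS F n) b = fsumS (fun j => fmul (F j) b) n.
Proof.
  intros; fext; unfold fmul, fsumS.
  rewrite <- Csum_swap. apply Csum_ext; intros. rewrite Csum_mul_r. reflexivity.
Qed.

Section Ser.
Variable c : nat -> Cplx.
Local Notation g := (gser c).
Local Notation q := (finv (gser c)).

Lemma g0 : g O = C1. Proof. reflexivity. Qed.
Lemma gq : fmul g q = fone. Proof. apply finv_spec; reflexivity. Qed.

Lemma fser_sh : fser c = sh 1 g.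
Proof. fext; unfold fser, sh; destruct x; simpl; auto. rewrite Nat.sub_0_r; reflexivity. Qed.

Lemma gpowZ_succ : forall k, gpowZ c (k + 1) = fmul g (gpowZ c k).
Proof.
  intros [|p|p].
  - simpl. reflexivity.
  - replace (Z.pos p + 1)%Z with (Z.pos (Pos.succ p)) by lia. simpl.
    rewrite Pos2Nat.inj_succ. reflexivity.
  - destruct (Pos.succ_pred_or p) as [->|E].
    + simpl. rewrite fmul_fone_r. symmetry; apply gq.
    + rewrite <- E. replace (Z.neg (Pos.succ (Pos.pred p)) + 1)%Z with (Z.neg (Pos.pred p)) by lia.
      simpl. rewrite Pos2Nat.inj_succ. simpl.
      rewrite <- fmul_assoc. rewrite gq. rewrite fmul_fone_l. reflexivity.
Qed.

Lemma gpowZ_pred : forall k, gpowZ c (k - 1) = fmul q (gpowZ c k).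
Proof.
  intros k. replace k with ((k - 1) + 1)%Z at 2 by lia. rewrite gpowZ_succ.
  rewrite <- fmul_assoc, (fmul_comm q), gq, fmul_fone_l. reflexivity.
Qed.

Lemma gpowZ_add : forall a b, gpowZ c (a + b) = fmul (gpowZ c a) (gpowZ c b).
Proof.
  intros a b. induction b using Z.peano_ind.
  - rewrite Z.add_0_r. simpl. rewrite fmul_fone_r; reflexivity.
  - rewrite <- Z.add_1_r, Z.add_assoc, !gpowZ_succ, IHb.
    rewrite <- !fmul_assoc, (fmul_comm g). reflexivity.
  - rewrite <- Z.sub_1_r, Z.add_sub_assoc, !gpowZ_pred, IHb.
    rewrite <- !fmul_assoc, (fmul_comm q). reflexivity.
Qed.

Lemma gpowZ_nat : forall n, gpowZ c (Z.of_nat n) = fpow g n.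
Proof. intros [|n]. reflexivity. simpl. rewrite SuccNat2Pos.id_succ. reflexivity. Qed.

Lemma gpowZ_negnat : forall n, gpowZ c (- Z.of_nat n) = fpow q n.
Proof. intros [|n]. reflexivity. simpl. rewrite SuccNat2Pos.id_succ. reflexivity. Qed.

Lemma gpowZ_0coef : forall k, gpowZ c k O = C1.
Proof.
  intros [|p|p]; simpl. reflexivity. apply fpow_0_coef; reflexivity.
  apply fpow_0_coef. apply finv_0.
Qed.

(* derivative operator z d/dz *)
Definition fD (a : FPS) : FPS := fun n => Cmul (RtoC (INR n)) (a n).

Lemma fD_mul : forall a b, fD (fmul a b) = fadd (fmul (fD a) b) (fmul a (fD b)).
Proof.
  intros a b; fext; unfold fD, fmul, fadd. rewrite <- Csum_add, <- Csum_mul_l.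
  apply Csum_ext; intros k Hk.
  assert (RtoC (INR x) = Cadd (RtoC (INR k)) (RtoC (INR (x - k)))) as ->.
  { rewrite <- RtoC_add, minus_INR by lia. f_equal; ring. }
  ring.
Qed.

Lemma fD_fone : fD fone = fzero.
Proof. fext; unfold fD, fone, fzero; destruct x; apply Ceq; simpl; ring. Qed.

Lemma fD_q : fD q = fopp (fmul q (fmul q (fD g))).
Proof.
  assert (H : fadd (fmul (fD g) q) (fmul g (fD q)) = fzero).
  { rewrite <- fD_mul, gq. apply fD_fone. }
  transitivity (fmul (fmul g q) (fD q)). rewrite gq; ring.
  transitivity (fsub (fmul q (fadd (fmul (fD g) q) (fmul g (fD q)))) (fmul q (fmul q (fD g)))).
  ring. rewrite H. ring.
Qed.

Lemma fD_qpow : forall k, fD (fpow q (S k)) =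
  fopp (fmul (fC (RtoC (INR (S k)))) (fmul (fpow q (S (S k))) (fD g))).
Proof.
  induction k.
  - simpl. rewrite !fmul_fone_r, fD_q, RtoC_1, fC_1. ring.
  - change (fpow q (S (S k))) with (fmul q (fpow q (S k))).
    rewrite fD_mul, IHk, fD_q. change (fpow q (S (S (S k)))) with (fmul q (fmul q (fpow q (S k)))).
    rewrite (S_INR (S k)), RtoC_add, fC_add, RtoC_1, fC_1.
    change (fpow q (S (S k))) with (fmul q (fpow q (S k))). ring.
Qed.

Lemma fpser_eq : fpser c = fadd g (fD g).
Proof.
  fext; unfold fpser, fderiv, fadd, fD, fser.
  rewrite S_INR, RtoC_add, RtoC_1. ring.
Qed.

Lemma fmul_fC_coef : forall w a n, fmul (fC w) a n = Cmul w (a n).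
Proof. intros. rewrite <- fscale_fC. reflexivity. Qed.

(* core residue fact *)
Lemma core : forall k, (1 <= k)%nat -> fmul (fpow q (S k)) (fpser c) k = C0.
Proof.
  intros k Hk. destruct k as [|k']. lia.
  rewrite fpser_eq, fmul_fadd_r.
  assert (E1 : fmul (fpow q (S (S k'))) g = fpow q (S k')).
  { change (fpow q (S (S k'))) with (fmul q (fpow q (S k'))).
    rewrite fmul_comm, <- fmul_assoc, gq, fmul_fone_l. reflexivity. }
  rewrite E1. unfold fadd.
  assert (E2 : fD (fpow q (S k')) (S k') =
     Copp (Cmul (RtoC (INR (S k'))) (fmul (fpow q (S (S k'))) (fD g) (S k')))).
  { rewrite fD_qpow. unfold fopp. rewrite fmul_fC_coef. reflexivity. }
  unfold fD at 1 in E2.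
  assert (INR (S k') <> 0) by (apply not_0_INR; lia).
  assert (RtoC (INR (S k')) <> C0) by (intro E; injection E; auto).
  set (X := fmul (fpow q (S (S k'))) (fD g) (S k')) in *.
  set (Y := fpow q (S k') (S k')) in *.
  set (r := RtoC (INR (S k'))) in *.
  assert (HX : Cmul r (Cadd Y X) = C0).
  { transitivity (Cadd (Cmul r Y) (Cmul r X)). ring. rewrite E2; ring. }
  transitivity (Cmul (Cinv r) (Cmul r (Cadd Y X))). field; auto. rewrite HX; ring.
Qed.

Lemma core0 : fmul (fpow q 1) (fpser c) O = C1.
Proof.
  rewrite fmul_0. simpl. rewrite fmul_fone_r, finv_0. unfold fpser, fderiv, fser.
  simpl. apply Ceq; simpl; ring.
Qed.

End Ser.


Section Formal.
Variable c : nat -> Cplx.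
Local Notation g := (gser c).
Local Notation q := (finv (gser c)).
Local Notation fp := (fpser c).

Lemma lc_sh : forall s m p j, (j <= p)%nat ->
  lc (1 - Z.of_nat j) s (Z.of_nat m + 1 - Z.of_nat p) = sh (p - j) s m.
Proof.
  intros s m p j Hj. unfold lc, sh.
  destruct (Z.leb_spec 0 (Z.of_nat m + 1 - Z.of_nat p - (1 - Z.of_nat j)));
  destruct (Nat.leb_spec (p - j) m); try lia; try reflexivity.
  f_equal. lia.
Qed.

Definition Eser (p : nat) (al : nat -> Cplx) : FPS :=
  fadd (fsub fp (gpowZ c (1 - Z.of_nat p)))
       (fsumS (fun j => fmul (fC (al j)) (sh (p - j)%nat (gpowZ c (1 - Z.of_nat j)))) p).

Lemma Eser_zero : forall p al, lam_spec c p al -> forall m, (m <= p)%nat -> Eser p al m = C0.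
Proof.
  intros p al H m Hm. specialize (H (Z.of_nat m + 1 - Z.of_nat p)%Z ltac:(lia)).
  rewrite !lc_sh in H by lia. rewrite Nat.sub_diag, !sh_0 in H.
  rewrite <- H. unfold Eser, fadd, fsub, fsumS. f_equal.
  apply Csum_ext; intros j Hj. rewrite fmul_fC_coef, lc_sh by lia. reflexivity.
Qed.

Lemma fmul_low_zero : forall a b N, (forall m, (m <= N)%nat -> a m = C0) -> fmul a b N = C0.
Proof. intros; unfold fmul; apply Csum_zero; intros k Hk; rewrite H by lia; ring. Qed.

Definition beta (p j : nat) : Cplx :=
  fmul (fmul fp fp) (gpowZ c (Z.of_nat j - 2)) (p - j)%nat.

Lemma sh_coef_ge : forall k s n, (k <= n)%nat -> sh k s n = s (n - k)%nat.
Proof. intros; unfold sh; destruct (Nat.leb_spec k n); [reflexivity|lia]. Qed.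
Lemma sh_coef_lt : forall k s n, (n < k)%nat -> sh k s n = C0.
Proof. intros; unfold sh; destruct (Nat.leb_spec k n); [lia|reflexivity]. Qed.

Lemma al_formula : forall p al, lam_spec c p al -> forall j, (j < p)%nat -> al j = Copp (beta p j).
Proof.
  intros p al Hs j Hj.
  set (Y := fmul (gpowZ c (Z.of_nat j - 2)) fp).
  assert (H0 : fmul (Eser p al) Y (p - j)%nat = C0).
  { apply fmul_low_zero. intros; apply Eser_zero; auto; lia. }
  unfold Eser in H0. rewrite fmul_fadd_l, fmul_fsub_l, fmul_fsumS_l in H0.
  unfold fadd, fsub, fsumS in H0.
  assert (T2 : fmul (gpowZ c (1 - Z.of_nat p)) Y (p - j)%nat = C0).
  { unfold Y. rewrite <- fmul_assoc, <- gpowZ_add.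
    replace (1 - Z.of_nat p + (Z.of_nat j - 2))%Z with (- Z.of_nat (S (p - j)))%Z by lia.
    rewrite gpowZ_negnat. apply core. lia. }
  rewrite T2 in H0.
  rewrite (Csum_single _ _ j) in H0; auto.
  2:{ intros i Hi Hij. rewrite fmul_assoc, fmul_sh, fmul_fC_coef.
      destruct (Nat.lt_ge_cases i j).
      - rewrite sh_coef_lt by lia. ring.
      - rewrite sh_coef_ge by lia. unfold Y. rewrite <- fmul_assoc, <- gpowZ_add.
        replace (1 - Z.of_nat i + (Z.of_nat j - 2))%Z with (- Z.of_nat (S (i - j)))%Z by lia.
        rewrite gpowZ_negnat. replace (p - j - (p - i))%nat with (i - j)%nat by lia.
        rewrite core by lia. ring. }
  rewrite fmul_assoc, fmul_sh, fmul_fC_coef, sh_coef_ge in H0 by lia.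
  unfold Y in H0. rewrite <- (fmul_assoc (gpowZ c (1 - Z.of_nat j))), <- gpowZ_add in H0.
  replace (1 - Z.of_nat j + (Z.of_nat j - 2))%Z with (- Z.of_nat 1)%Z in H0 by lia.
  rewrite gpowZ_negnat in H0. replace (p - j - (p - j))%nat with O in H0 by lia.
  rewrite core0 in H0.
  unfold beta. replace (fmul (fmul fp fp) (gpowZ c (Z.of_nat j - 2))) with
     (fmul fp (fmul (gpowZ c (Z.of_nat j - 2)) fp)) by ring.
  set (X := fmul fp (fmul (gpowZ c (Z.of_nat j - 2)) fp) (p - j)%nat) in *.
  transitivity (Csub (Cadd (Csub X C0) (Cmul (al j) C1)) X).
  ring. rewrite H0. ring.
Qed.

Definition Aser : FPS := fmul (fmul fp fp) (finv (fmul g g)).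
Definition Kser (w : Cplx) : FPS := finv (fsub fone (fscale w (fser c))).

Lemma finv_gg : finv (fmul g g) = gpowZ c (-2).
Proof.
  rewrite finv_mul by reflexivity. replace (-2)%Z with (- Z.of_nat 2)%Z by reflexivity.
  rewrite gpowZ_negnat. simpl. rewrite fmul_fone_r. reflexivity.
Qed.

Lemma fser0 : fser c O = C0. Proof. reflexivity. Qed.

Definition Lser (w : Cplx) (p : nat) : FPS :=
  fsumS (fun k => fmul (fC (Cpow w k)) (sh k (gpowZ c (Z.of_nat k)))) (S p).

Lemma Kser_L : forall w p n, (n <= p)%nat -> Kser w n = Lser w p n.
Proof.
  intros w p n Hn. unfold Kser, finv, Lser, fsumS.
  replace (fsub fone (fsub fone (fscale w (fser c)))) with (fscale w (fser c))
    by (fext; unfold fsub, fscale; ring).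
  replace (S p) with (S n + (p - n))%nat by lia. rewrite Csum_plus.
  rewrite (Csum_zero _ (p - n)%nat).
  2:{ intros k _. rewrite fmul_fC_coef, sh_coef_lt by lia. ring. }
  rewrite Cring.(Radd_comm), Cring.(Radd_0_l). apply Csum_ext; intros k Hk.
  rewrite fpow_fscale, fscale_fC, fser_sh, fpow_sh, gpowZ_nat. f_equal. f_equal. f_equal. lia.
Qed.

Lemma beta_p : forall p, beta p p = C1.
Proof.
  intros p. unfold beta. rewrite Nat.sub_diag, fmul_0, gpowZ_0coef, fmul_0.
  unfold fpser, fderiv, fser; simpl. apply Ceq; simpl; ring.
Qed.

Lemma AK_coef : forall w p, fmul Aser (Kser w) p = Csum (fun k => Cmul (Cpow w k) (beta p k)) (S p).
Proof.
  intros w p. rewrite (fmul_low Aser Aser (Kser w) (Lser w p)) by (auto; intros; apply Kser_L; auto).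
  unfold Lser. rewrite fmul_comm, fmul_fsumS_l. unfold fsumS. apply Csum_ext; intros k Hk.
  rewrite fmul_comm, <- fmul_assoc, (fmul_comm Aser), fmul_assoc, fmul_fC_coef.
  rewrite fmul_comm, fmul_sh, sh_coef_ge by lia. unfold beta, Aser. rewrite finv_gg.
  f_equal. rewrite fmul_comm, fmul_assoc, <- gpowZ_add.
  replace (-2 + Z.of_nat k)%Z with (Z.of_nat k - 2)%Z by lia. reflexivity.
Qed.

Lemma Czpow_inv : forall u k, u <> C0 -> Cmul u (Cpow (Cinv u) k) = Czpow u (1 - Z.of_nat k).
Proof.
  intros u k Hu. destruct k as [|[|k]].
  - simpl. ring.
  - simpl. field. auto.
  - replace (1 - Z.of_nat (S (S k)))%Z with (Z.neg (Pos.of_succ_nat k)) by lia.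
    simpl Czpow. rewrite SuccNat2Pos.id_succ, Cinv_pow by auto.
    pose proof (Cpow_nz u k Hu). simpl. field. auto.
Qed.

Lemma Lambda_AK : forall p al u, lam_spec c p al -> u <> C0 ->
  Lambda p al u = Copp (Cmul u (fmul Aser (Kser (Cinv u)) p)).
Proof.
  intros p al u Hs Hu. rewrite AK_coef. unfold Lambda.
  rewrite (Csum_ext (fun j => Cmul (al j) (Czpow u (1 - Z.of_nat j)))
             (fun j => Copp (Cmul u (Cmul (Cpow (Cinv u) j) (beta p j))))).
  2:{ intros j Hj. rewrite (al_formula p al Hs j Hj), <- Czpow_inv by auto. ring. }
  simpl Csum at 2. rewrite Csum_opp.
  rewrite Csum_mul_l, beta_p, <- Czpow_inv by auto. ring.
Qed.

Lemma AK_T : forall w p, fmul Aser (Kser w) (S p) = Cadd (Aser (S p)) (Cmul w (Tpoly c p w)).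
Proof.
  intros w p.
  assert (HK : fmul (fsub fone (fmul (fC w) (fmul fX g))) (Kser w) = fone).
  { unfold Kser. rewrite fmul_fX, <- fser_sh, <- fscale_fC. apply finv_spec.
    unfold fsub, fscale; rewrite fser0; simpl. apply Ceq; simpl; ring. }
  assert (HD : finv (denom c w) = fmul q (Kser w)).
  { unfold denom, Kser. rewrite fmul_fX, <- fser_sh. apply finv_mul. reflexivity.
    unfold fsub, fscale; rewrite fser0; simpl. apply Ceq; simpl; ring. }
  pose proof (gq c) as Hgq.
  assert (E : fmul Aser (Kser w) = fadd Aser (fmul (fC w) (fmul fX (fmul (fmul fp fp) (finv (denom c w)))))).
  { rewrite HD. unfold Aser. rewrite finv_mul by reflexivity.
    set (K := Kser w) in *.
    transitivity (fmul (fmul (fmul fp fp) (fmul q q))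
                   (fadd (fmul (fsub fone (fmul (fC w) (fmul fX g))) K) (fmul (fmul (fC w) (fmul fX g)) K))).
    ring. rewrite HK.
    transitivity (fadd (fmul (fmul fp fp) (fmul q q))
        (fmul (fC w) (fmul fX (fmul (fmul g q) (fmul (fmul fp fp) (fmul q K)))))).
    ring. rewrite Hgq. ring. }
  rewrite E. unfold fadd. rewrite fmul_fC_coef, fmul_fX, sh_coef_ge by lia.
  replace (S p - 1)%nat with p by lia. reflexivity.
Qed.

End Formal.


Lemma part1 : forall c (p : nat) (w : Cplx), (1 <= p)%nat ->
     Tpoly c (p - 1) w =
     Csum (fun k => Cmul (RtoC (INR (S k)))
                         (Cmul (gser c k) (Fpoly c (p - 1 - k) w))) p.
Proof.
  intros c p w Hp. unfold Tpoly, Fpoly. rewrite fmul_assoc. unfold fmul at 1.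
  replace (S (p - 1)) with p by lia. apply Csum_ext; intros k Hk.
  unfold fpser, fderiv, fser. ring.
Qed.

Lemma part2 : forall c al p u, lam_spec c p al -> (1 <= p)%nat -> u <> C0 ->
  Cadd (Lambda p al u) (Cmul (acoef c p) u) = Copp (Tpoly c (p - 1) (Cinv u)).
Proof.
  intros c al p u Hs Hp Hu. rewrite (Lambda_AK c p al u Hs Hu).
  destruct p as [|p']. lia. rewrite AK_T. replace (S p' - 1)%nat with p' by lia.
  unfold acoef. fold (Aser c). field. auto.
Qed.


Definition N2 (a : Cplx) := Re a * Re a + Im a * Im a.
Lemma N2_ge0 : forall a, 0 <= N2 a. Proof. intros; unfold N2; nra. Qed.

Lemma Cnorm_ge0 : forall a, 0 <= Cnorm a. Proof. intros; apply sqrt_pos. Qed.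
Lemma Cnorm_sq : forall a, Cnorm a * Cnorm a = N2 a.
Proof. intros; apply sqrt_sqrt, N2_ge0. Qed.

Lemma Cnorm_le_sq : forall a y, 0 <= y -> N2 a <= y * y -> Cnorm a <= y.
Proof.
  intros a y Hy H. unfold Cnorm. rewrite <- (sqrt_square y Hy). apply sqrt_le_1_alt. exact H.
Qed.

Lemma sq_le_Cnorm : forall a x, 0 <= x -> x * x <= N2 a -> x <= Cnorm a.
Proof.
  intros a x Hx H. unfold Cnorm. rewrite <- (sqrt_square x Hx). apply sqrt_le_1_alt. exact H.
Qed.

Lemma Cnorm_mul : forall a b, Cnorm (Cmul a b) = Cnorm a * Cnorm b.
Proof.
  intros [a1 a2] [b1 b2]; unfold Cnorm; simpl. rewrite <- sqrt_mult by nra.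
  f_equal; ring.
Qed.

Lemma Re_le : forall a, Rabs (Re a) <= Cnorm a.
Proof.
  intros a. unfold Cnorm. rewrite <- sqrt_Rsqr_abs. apply sqrt_le_1_alt. unfold Rsqr. nra.
Qed.
Lemma Im_le : forall a, Rabs (Im a) <= Cnorm a.
Proof.
  intros a. unfold Cnorm. rewrite <- sqrt_Rsqr_abs. apply sqrt_le_1_alt. unfold Rsqr. nra.
Qed.

Lemma Cnorm_ReIm : forall a, Cnorm a <= Rabs (Re a) + Rabs (Im a).
Proof.
  intros a. apply Cnorm_le_sq. pose proof (Rabs_pos (Re a)); pose proof (Rabs_pos (Im a)); lra.
  unfold N2. pose proof (Rabs_pos (Re a)); pose proof (Rabs_pos (Im a)).
  assert (Re a * Re a = Rabs (Re a) * Rabs (Re a)) by (rewrite <- Rabs_mult, Rabs_right; nra).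
  assert (Im a * Im a = Rabs (Im a) * Rabs (Im a)) by (rewrite <- Rabs_mult, Rabs_right; nra).
  nra.
Qed.

Lemma Cnorm_tri : forall a b, Cnorm (Cadd a b) <= Cnorm a + Cnorm b.
Proof.
  intros a b. apply Cnorm_le_sq. pose proof (Cnorm_ge0 a); pose proof (Cnorm_ge0 b); lra.
  assert (Hab : Re a * Re b + Im a * Im b <= Cnorm a * Cnorm b).
  { rewrite <- Cnorm_mul. destruct (Rle_or_lt (Re a * Re b + Im a * Im b) 0).
    pose proof (Cnorm_ge0 (Cmul a b)); lra.
    apply sq_le_Cnorm. lra. destruct a as [a1 a2]; destruct b as [b1 b2]; unfold N2; simpl in *. pose proof (Rle_0_sqr (a1*b2-a2*b1)) as Hs; unfold Rsqr in Hs; lra. }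
  pose proof (Cnorm_sq a); pose proof (Cnorm_sq b). unfold N2 in *.
  destruct a as [a1 a2]; destruct b as [b1 b2]; simpl in *. nra.
Qed.

Lemma Cnorm_opp : forall a, Cnorm (Copp a) = Cnorm a.
Proof. intros [a1 a2]; unfold Cnorm; simpl; f_equal; ring. Qed.

Lemma Cnorm_sub_tri : forall a b, Cnorm (Csub a b) <= Cnorm a + Cnorm b.
Proof. intros; unfold Csub; rewrite <- (Cnorm_opp b); apply Cnorm_tri. Qed.

Lemma Cnorm_sub_sym : forall a b, Cnorm (Csub a b) = Cnorm (Csub b a).
Proof. intros; rewrite <- Cnorm_opp; f_equal; ring. Qed.

Lemma Cnorm_C0 : Cnorm C0 = 0.
Proof. unfold Cnorm; simpl. replace (0*0+0*0) with 0 by ring. apply sqrt_0. Qed.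

Lemma Cnorm_C1 : Cnorm C1 = 1.
Proof. unfold Cnorm; simpl. replace (1*1+0*0) with 1 by ring. apply sqrt_1. Qed.

Lemma Cnorm_eq0 : forall a, Cnorm a = 0 -> a = C0.
Proof.
  intros [a1 a2] H. unfold Cnorm in H; simpl in H. apply sqrt_eq_0 in H; [|nra].
  apply Ceq; simpl; nra.
Qed.

Lemma Cnorm_pos : forall a, a <> C0 -> 0 < Cnorm a.
Proof. intros a H. destruct (Cnorm_ge0 a); auto. exfalso; apply H, Cnorm_eq0; auto. Qed.

Lemma Cnorm_RtoC : forall x, Cnorm (RtoC x) = Rabs x.
Proof. intros; unfold Cnorm; simpl. rewrite <- sqrt_Rsqr_abs. f_equal. unfold Rsqr; ring. Qed.

Lemma Cnorm_pow : forall z n, Cnorm (Cpow z n) = Cnorm z ^ n.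
Proof. intros z n; induction n; simpl. apply Cnorm_C1. rewrite Cnorm_mul, IHn; ring. Qed.

Lemma Cnorm_tri3 : forall a b c, Cnorm (Csub a c) <= Cnorm (Csub a b) + Cnorm (Csub b c).
Proof.
  intros. replace (Csub a c) with (Cadd (Csub a b) (Csub b c)) by ring. apply Cnorm_tri.
Qed.

Fixpoint Rsum (f : nat -> R) (n : nat) : R :=
  match n with O => 0 | S m => Rsum f m + f m end.

Lemma Rsum_ext : forall f g n, (forall k, (k < n)%nat -> f k = g k) -> Rsum f n = Rsum g n.
Proof. intros f g n H; induction n; simpl; auto. rewrite IHn, H by (auto; lia). auto. Qed.
Lemma Rsum_le : forall f g n, (forall k, (k < n)%nat -> f k <= g k) -> Rsum f n <= Rsum g n.
Proof. intros f g n H; induction n; simpl. lra. pose proof (H n ltac:(lia)). assert (Rsum f n <= Rsum g n) by (apply IHn; auto). lra. Qed.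
Lemma Rsum_nonneg : forall f n, (forall k, (k < n)%nat -> 0 <= f k) -> 0 <= Rsum f n.
Proof. intros f n H; induction n; simpl. lra. pose proof (H n ltac:(lia)). assert (0 <= Rsum f n) by (apply IHn; auto). lra. Qed.
Lemma Rsum_scal : forall c f n, Rsum (fun k => c * f k) n = c * Rsum f n.
Proof. intros c f n; induction n; simpl. ring. rewrite IHn; ring. Qed.
Lemma Rsum_const : forall c n, Rsum (fun _ => c) n = INR n * c.
Proof. intros c n; induction n; simpl Rsum. simpl; ring. rewrite IHn, S_INR; ring. Qed.

Lemma Cnorm_Csum : forall a n, Cnorm (Csum a n) <= Rsum (fun k => Cnorm (a k)) n.
Proof.
  intros a n; induction n; simpl. rewrite Cnorm_C0; lra.
  eapply Rle_trans. apply Cnorm_tri. lra.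
Qed.

Lemma geo_sum : forall t n, 0 <= t <= 1/2 -> Rsum (fun k => t ^ k) n <= 2 - 2 * t ^ n.
Proof.
  intros t n Ht; induction n; simpl. lra.
  assert (0 <= t ^ n) by (apply pow_le; lra). nra.
Qed.
Lemma geo_sum2 : forall t n, 0 <= t <= 1/2 -> Rsum (fun k => t ^ k) n <= 2.
Proof. intros. pose proof (geo_sum t n H). assert (0 <= t^n) by (apply pow_le; lra). lra. Qed.

Lemma pow2_ge : forall n, INR (S n) <= 2 ^ n.
Proof.
  induction n. simpl; lra. rewrite S_INR. change (2 ^ S n) with (2 * 2 ^ n).
  assert (1 <= 2 ^ n) by (apply pow_R1_Rle; lra). lra.
Qed.

Lemma pow4_ge : forall n, INR (S n) * INR (S n) <= 4 ^ n.
Proof.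
  induction n. simpl; lra. rewrite (S_INR (S n)). change (4 ^ S n) with (4 * 4 ^ n).
  assert (0 <= INR n) by apply pos_INR. rewrite S_INR in *.
  assert ((INR n + 1 + 1) * (INR n + 1 + 1) <= 4 * ((INR n + 1) * (INR n + 1))) by nra.
  lra.
Qed.

Lemma half_pow_small : forall eps, 0 < eps -> exists N, forall n, (N <= n)%nat -> (1/2) ^ n < eps.
Proof.
  intros eps He. destruct (pow_lt_1_zero (1/2) ltac:(rewrite Rabs_right; lra) eps He) as [N HN].
  exists N. intros n Hn. specialize (HN n Hn). rewrite Rabs_right in HN; auto.
  apply Rle_ge, pow_le; lra.
Qed.


Definition bnd (a : FPS) (M R : R) : Prop := forall n, Cnorm (a n) <= M * R ^ n.
Definition term (a : FPS) (z : Cplx) : nat -> Cplx := fun n => Cmul (a n) (Cpow z n).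

Lemma le_eps : forall x y, (forall eps, 0 < eps -> x < y + eps) -> x <= y.
Proof.
  intros x y H. destruct (Rle_or_lt x y); auto. specialize (H ((x - y)/2) ltac:(lra)). lra.
Qed.

Lemma Csub_eq0 : forall x y, Csub x y = C0 -> x = y.
Proof. intros x y H. transitivity (Cadd (Csub x y) y). ring. rewrite H; ring. Qed.

Lemma Cseries_unique : forall a s1 s2, Cseries_to a s1 -> Cseries_to a s2 -> s1 = s2.
Proof.
  intros a s1 s2 H1 H2. apply Csub_eq0, Cnorm_eq0.
  apply Rle_antisym; [|apply Cnorm_ge0]. apply le_eps; intros eps He.
  destruct (H1 (eps/2) ltac:(lra)) as [N1 HN1]. destruct (H2 (eps/2) ltac:(lra)) as [N2 HN2].
  specialize (HN1 (max N1 N2) ltac:(lia)). specialize (HN2 (max N1 N2) ltac:(lia)).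
  rewrite Cnorm_sub_sym in HN1.
  pose proof (Cnorm_tri3 s1 (Csum a (max N1 N2)) s2). lra.
Qed.

Lemma Cseries_add : forall a b s t, Cseries_to a s -> Cseries_to b t ->
  Cseries_to (fun n => Cadd (a n) (b n)) (Cadd s t).
Proof.
  intros a b s t Ha Hb eps He.
  destruct (Ha (eps/2) ltac:(lra)) as [N1 HN1]. destruct (Hb (eps/2) ltac:(lra)) as [N2 HN2].
  exists (max N1 N2). intros n Hn. rewrite Csum_add.
  replace (Csub (Cadd (Csum a n) (Csum b n)) (Cadd s t)) with
    (Cadd (Csub (Csum a n) s) (Csub (Csum b n) t)) by ring.
  eapply Rle_lt_trans. apply Cnorm_tri.
  specialize (HN1 n ltac:(lia)). specialize (HN2 n ltac:(lia)). lra.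
Qed.

Lemma Cseries_scale : forall k a s, Cseries_to a s -> Cseries_to (fun n => Cmul k (a n)) (Cmul k s).
Proof.
  intros k a s Ha eps He. pose proof (Cnorm_ge0 k).
  destruct (Ha (eps / (Cnorm k + 1)) ltac:(apply Rdiv_lt_0_compat; lra)) as [N HN].
  exists N. intros n Hn. rewrite Csum_mul_l.
  replace (Csub (Cmul k (Csum a n)) (Cmul k s)) with (Cmul k (Csub (Csum a n) s)) by ring.
  rewrite Cnorm_mul. specialize (HN n Hn).
  apply Rle_lt_trans with ((Cnorm k + 1) * Cnorm (Csub (Csum a n) s)).
  pose proof (Cnorm_ge0 (Csub (Csum a n) s)); nra.
  apply Rmult_lt_compat_l with (r := Cnorm k + 1) in HN; [|lra].
  replace ((Cnorm k + 1) * (eps / (Cnorm k + 1))) with eps in HN by (field; lra). lra.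
Qed.

Lemma Cseries_ext : forall a b s, (forall n, a n = b n) -> Cseries_to a s -> Cseries_to b s.
Proof. intros a b s H Ha. replace b with a by (apply functional_extensionality; auto). auto. Qed.

Lemma Cseries_sub : forall a b s t, Cseries_to a s -> Cseries_to b t ->
  Cseries_to (fun n => Csub (a n) (b n)) (Csub s t).
Proof.
  intros. pose proof (Cseries_scale (Copp C1) b t H0).
  pose proof (Cseries_add _ _ _ _ H H1).
  replace (Csub s t) with (Cadd s (Cmul (Copp C1) t)) by ring.
  eapply Cseries_ext; [|exact H2]. intros; simpl; ring.
Qed.

Lemma Cseries_le : forall a s B, Cseries_to a s -> (forall n, Cnorm (Csum a n) <= B) -> Cnorm s <= B.
Proof.
  intros a s B Ha HB. apply le_eps; intros eps He.
  destruct (Ha eps He) as [N HN]. specialize (HN N (le_n N)).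
  specialize (HB N). rewrite Cnorm_sub_sym in HN.
  pose proof (Cnorm_tri (Csum a N) (Csub s (Csum a N))).
  replace (Cadd (Csum a N) (Csub s (Csum a N))) with s in H by ring. lra.
Qed.

Lemma block_bound : forall a M R z n m, bnd a M R -> 0 <= M -> 0 <= R -> Cnorm z * R <= 1/2 ->
  (n <= m)%nat ->
  Cnorm (Csub (Csum (term a z) m) (Csum (term a z) n)) <= 2 * M * (Cnorm z * R) ^ n.
Proof.
  intros a M R z n m Hb HM HR Ht Hnm. set (t := Cnorm z * R) in *.
  assert (0 <= t) by (unfold t; pose proof (Cnorm_ge0 z); nra).
  replace m with (n + (m - n))%nat by lia. rewrite Csum_plus.
  replace (Csub (Cadd (Csum (term a z) n) (Csum (fun k => term a z (n + k)%nat) (m - n)))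
             (Csum (term a z) n)) with (Csum (fun k => term a z (n + k)%nat) (m - n)) by ring.
  eapply Rle_trans. apply Cnorm_Csum.
  eapply Rle_trans. apply Rsum_le with (g := fun k => M * t ^ n * t ^ k).
  { intros k _. unfold term. rewrite Cnorm_mul, Cnorm_pow.
    eapply Rle_trans. apply Rmult_le_compat_r. apply pow_le, Cnorm_ge0. apply Hb.
    rewrite !pow_add. unfold t. rewrite !Rpow_mult_distr. apply Req_le. ring. }
  rewrite Rsum_scal. pose proof (geo_sum2 t (m - n) ltac:(lra)).
  assert (0 <= M * t ^ n) by (apply Rmult_le_pos; auto; apply pow_le; auto). apply Rle_trans with ((M * t ^ n) * 2); [apply Rmult_le_compat_l; auto | right; ring].
Qed.

Lemma Cseries_exists : forall a M R z, bnd a M R -> 0 <= M -> 0 <= R -> Cnorm z * R <= 1/2 ->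
  exists s, Cseries_to (term a z) s.
Proof.
  intros a M R z Hb HM HR Ht.
  assert (0 <= Cnorm z * R) by (pose proof (Cnorm_ge0 z); nra).
  assert (HC : forall eps, 0 < eps -> exists N, forall n m, (N <= n)%nat -> (N <= m)%nat ->
            Cnorm (Csub (Csum (term a z) m) (Csum (term a z) n)) < eps).
  { intros eps He. destruct (half_pow_small (eps / (2*M+1)) ltac:(apply Rdiv_lt_0_compat; lra)) as [N HN].
    exists N. intros n m Hn Hm.
    assert (forall n m, (N <= n)%nat -> (n <= m)%nat ->
       Cnorm (Csub (Csum (term a z) m) (Csum (term a z) n)) < eps).
    { intros n0 m0 Hn0 Hm0. eapply Rle_lt_trans. apply (block_bound a M R z n0 m0); auto.
      specialize (HN n0 Hn0).
      assert ((Cnorm z * R) ^ n0 <= (1/2) ^ n0) by (apply pow_incr; lra).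
      apply Rmult_lt_compat_l with (r := 2*M+1) in HN; [|lra].
      replace ((2*M+1) * (eps / (2*M+1))) with eps in HN by (field; lra).
      assert (0 <= (1/2)^n0) by (apply pow_le; lra). nra. }
    destruct (Nat.le_ge_cases n m). apply H0; auto.
    rewrite Cnorm_sub_sym. apply H0; auto. }
  assert (HR1 : Cauchy_crit (fun n => Re (Csum (term a z) n))).
  { intros eps He. destruct (HC eps He) as [N HN]. exists N. intros n m Hn Hm.
    unfold Rdist. eapply Rle_lt_trans; [|apply (HN m n); auto].
    eapply Rle_trans; [|apply Re_le]. simpl. right; f_equal; ring. }
  assert (HI1 : Cauchy_crit (fun n => Im (Csum (term a z) n))).
  { intros eps He. destruct (HC eps He) as [N HN]. exists N. intros n m Hn Hm.
    unfold Rdist. eapply Rle_lt_trans; [|apply (HN m n); auto].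
    eapply Rle_trans; [|apply Im_le]. simpl. right; f_equal; ring. }
  destruct (R_complete _ HR1) as [lr Hlr]. destruct (R_complete _ HI1) as [li Hli].
  exists (mkC lr li). intros eps He.
  destruct (Hlr (eps/2) ltac:(lra)) as [N1 HN1]. destruct (Hli (eps/2) ltac:(lra)) as [N2 HN2].
  exists (max N1 N2). intros n Hn. eapply Rle_lt_trans. apply Cnorm_ReIm.
  specialize (HN1 n ltac:(lia)). specialize (HN2 n ltac:(lia)). unfold Rdist in *.
  set (S := Csum (term a z) n) in *.
  assert (Re (Csub S (mkC lr li)) = Re S - lr) as -> by (unfold Csub, Cadd, Copp; simpl; ring).
  assert (Im (Csub S (mkC lr li)) = Im S - li) as -> by (unfold Csub, Cadd, Copp; simpl; ring).
  lra.
Qed.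

Lemma tail_bound : forall a M R z s N, bnd a M R -> 0 <= M -> 0 <= R -> Cnorm z * R <= 1/2 ->
  Cseries_to (term a z) s ->
  Cnorm (Csub (Csum (term a z) N) s) <= 2 * M * (Cnorm z * R) ^ N.
Proof.
  intros a M R z s N Hb HM HR Ht Hs. apply le_eps; intros eps He.
  destruct (Hs eps He) as [N1 HN1]. specialize (HN1 (max N N1) ltac:(lia)).
  pose proof (block_bound a M R z N (max N N1) Hb HM HR Ht ltac:(lia)).
  rewrite Cnorm_sub_sym in H.
  pose proof (Cnorm_tri3 (Csum (term a z) N) (Csum (term a z) (max N N1)) s). lra.
Qed.

Lemma bnd_mono : forall a M R R', bnd a M R -> 0 <= M -> 0 <= R -> R <= R' -> bnd a M R'.
Proof.
  intros a M R R' Hb HM HR HRR n. eapply Rle_trans. apply Hb.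
  apply Rmult_le_compat_l; auto. apply pow_incr; lra.
Qed.

Lemma bnd_monoM : forall a M M' R, bnd a M R -> M <= M' -> 0 <= R -> bnd a M' R.
Proof.
  intros a M M' R Hb HMM HR n. eapply Rle_trans. apply Hb.
  apply Rmult_le_compat_r; auto. apply pow_le; auto.
Qed.

Lemma prod_partial : forall a b z N,
  Csum (term (fmul a b) z) N = Csum (fun k => Cmul (term a z k) (Csum (term b z) (N - k))) N.
Proof.
  intros a b z N; induction N. reflexivity.
  change (Csum (term (fmul a b) z) (S N)) with (Cadd (Csum (term (fmul a b) z) N) (term (fmul a b) z N)).
  rewrite IHN.
  rewrite (Csum_ext (fun k => Cmul (term a z k) (Csum (term b z) (S N - k)))
     (fun k => Cadd (Cmul (term a z k) (Csum (term b z) (N - k))) (Cmul (term a z k) (term b z (N - k))))).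
  2:{ intros k Hk. replace (S N - k)%nat with (S (N - k)) by lia. simpl Csum at 1. ring. }
  rewrite Csum_add.
  change (Csum (fun k => Cmul (term a z k) (Csum (term b z) (N - k))) (S N)) with
    (Cadd (Csum (fun k => Cmul (term a z k) (Csum (term b z) (N - k))) N)
          (Cmul (term a z N) (Csum (term b z) (N - N)))).
  rewrite Nat.sub_diag. simpl Csum at 2.
  assert (term (fmul a b) z N = Csum (fun k => Cmul (term a z k) (term b z (N - k))) (S N)) as ->.
  { unfold term at 1, fmul. rewrite <- Csum_mul_r. apply Csum_ext; intros k Hk.
    unfold term. replace (Cpow z N) with (Cmul (Cpow z k) (Cpow z (N - k))).
    ring. rewrite <- Cpow_add. f_equal; lia. }
  change (Csum (term b z) 0) with C0. ring.
Qed.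

Lemma prod_conv : forall a b Ma Mb R z A B, bnd a Ma R -> bnd b Mb R -> 0 <= Ma -> 0 <= Mb -> 0 <= R ->
  Cnorm z * R <= 1/4 -> Cseries_to (term a z) A -> Cseries_to (term b z) B ->
  Cseries_to (term (fmul a b) z) (Cmul A B).
Proof.
  intros a b Ma Mb R z A B Ha Hb HMa HMb HR Ht HA HB.
  set (t := Cnorm z * R) in *.
  assert (0 <= t) by (unfold t; pose proof (Cnorm_ge0 z); nra).
  assert (Hbound : forall N, Cnorm (Csub (Csum (term (fmul a b) z) N) (Cmul A B)) <=
                     (2 * Ma * Mb + 2 * Ma * Cnorm B) * (1/2) ^ N).
  { intros N. rewrite prod_partial.
    replace (Csub (Csum (fun k => Cmul (term a z k) (Csum (term b z) (N - k))) N) (Cmul A B))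
      with (Cadd (Csum (fun k => Cmul (term a z k) (Csub (Csum (term b z) (N - k)) B)) N)
                 (Cmul (Csub (Csum (term a z) N) A) B)).
    2:{ rewrite (Csum_ext (fun k => Cmul (term a z k) (Csub (Csum (term b z) (N - k)) B))
            (fun k => Csub (Cmul (term a z k) (Csum (term b z) (N - k))) (Cmul (term a z k) B)))
          by (intros; ring).
        rewrite Csum_sub, Csum_mul_r. ring. }
    eapply Rle_trans. apply Cnorm_tri.
    assert (H1 : Cnorm (Csum (fun k => Cmul (term a z k) (Csub (Csum (term b z) (N - k)) B)) N)
                 <= 2 * Ma * Mb * (INR N * t ^ N)).
    { eapply Rle_trans. apply Cnorm_Csum.
      eapply Rle_trans. apply Rsum_le with (g := fun _ => 2 * Ma * Mb * t ^ N).
      { intros k Hk. rewrite Cnorm_mul.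
        pose proof (tail_bound b Mb R z B (N - k) Hb HMb HR ltac:(fold t; lra) HB) as T.
        assert (Cnorm (term a z k) <= Ma * t ^ k).
        { unfold term. rewrite Cnorm_mul, Cnorm_pow. unfold t. rewrite Rpow_mult_distr.
          pose proof (Ha k). pose proof (pow_le (Cnorm z) k (Cnorm_ge0 z)).
          apply Rle_trans with (Ma * R ^ k * Cnorm z ^ k). apply Rmult_le_compat_r; auto.
          right; ring. }
        fold t in T.
        apply Rle_trans with ((Ma * t ^ k) * (2 * Mb * t ^ (N - k))).
        apply Rmult_le_compat; auto using Cnorm_ge0.
        replace (t ^ N) with (t ^ k * t ^ (N - k)) by (rewrite <- pow_add; f_equal; lia).
        right; ring. }
      rewrite Rsum_const. right; ring. }
    assert (H2 : Cnorm (Cmul (Csub (Csum (term a z) N) A) B) <= 2 * Ma * t ^ N * Cnorm B).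
    { rewrite Cnorm_mul. apply Rmult_le_compat_r. apply Cnorm_ge0.
      apply (tail_bound a Ma R z A N Ha HMa HR ltac:(fold t; lra) HA). }
    assert (Hq : t ^ N <= (1/4) ^ N) by (apply pow_incr; lra).
    assert (Hq2 : (1/4) ^ N = (1/2) ^ N * (1/2) ^ N).
    { rewrite <- Rpow_mult_distr. f_equal; lra. }
    assert (Hn : INR N * (1/2) ^ N <= 1).
    { pose proof (pow2_ge N). rewrite S_INR in H0.
      assert (0 < 2 ^ N) by (apply pow_lt; lra).
      replace ((1/2) ^ N) with (/ 2 ^ N) by (rewrite <- pow_inv; f_equal; lra).
      apply Rmult_le_reg_r with (2 ^ N); auto. rewrite Rmult_assoc, Rinv_l by lra. lra. }
    assert (0 <= (1/2)^N) by (apply pow_le; lra).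
    assert (0 <= t ^ N) by (apply pow_le; auto).
    assert (Hn2 : INR N * t ^ N <= (1/2) ^ N).
    { pose proof (pos_INR N). apply Rle_trans with (INR N * ((1/2)^N * (1/2)^N)).
      apply Rmult_le_compat_l; auto. rewrite <- Hq2; auto.
      rewrite <- Rmult_assoc. apply Rle_trans with (1 * (1/2)^N); [apply Rmult_le_compat_r; auto | lra]. }
    assert (t ^ N <= (1/2) ^ N).
    { apply pow_incr; lra. }
    pose proof (Cnorm_ge0 B).
    assert (2 * Ma * Mb * (INR N * t ^ N) <= 2 * Ma * Mb * (1/2)^N)
      by (apply Rmult_le_compat_l; auto; nra).
    assert (2 * Ma * t ^ N * Cnorm B <= 2 * Ma * Cnorm B * (1/2)^N).
    { replace (2 * Ma * t ^ N * Cnorm B) with ((2 * Ma * Cnorm B) * t ^ N) by ring.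
      apply Rmult_le_compat_l; auto. nra. }
    lra. }
  intros eps He. set (K := 2 * Ma * Mb + 2 * Ma * Cnorm B).
  assert (0 <= K) by (unfold K; pose proof (Cnorm_ge0 B); nra).
  destruct (half_pow_small (eps / (K + 1)) ltac:(apply Rdiv_lt_0_compat; lra)) as [N HN].
  exists N. intros n Hn. eapply Rle_lt_trans. apply Hbound. fold K.
  specialize (HN n Hn). assert (0 <= (1/2)^n) by (apply pow_le; lra).
  apply Rmult_lt_compat_l with (r := K + 1) in HN; [|lra].
  replace ((K + 1) * (eps / (K + 1))) with eps in HN by (field; lra). nra.
Qed.

Lemma prod_bnd : forall a b Ma Mb R, bnd a Ma R -> bnd b Mb R -> 0 <= Ma -> 0 <= Mb -> 0 <= R ->
  bnd (fmul a b) (Ma * Mb) (2 * R).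
Proof.
  intros a b Ma Mb R Ha Hb HMa HMb HR n. unfold fmul.
  eapply Rle_trans. apply Cnorm_Csum.
  eapply Rle_trans. apply Rsum_le with (g := fun _ => Ma * Mb * R ^ n).
  { intros k Hk. rewrite Cnorm_mul.
    apply Rle_trans with ((Ma * R ^ k) * (Mb * R ^ (n - k))).
    apply Rmult_le_compat; auto using Cnorm_ge0.
    replace (R ^ n) with (R ^ k * R ^ (n - k)) by (rewrite <- pow_add; f_equal; lia).
    right; ring. }
  rewrite Rsum_const. rewrite Rpow_mult_distr. pose proof (pow2_ge n).
  assert (0 <= Ma * Mb * R ^ n) by (apply Rmult_le_pos; [nra| apply pow_le; auto]).
  nra.
Qed.


Lemma geo_diff : forall R Sg n, (Sg - R) * Rsum (fun k => R ^ k * Sg ^ (n - 1 - k)) n = Sg ^ n - R ^ n.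
Proof.
  intros R Sg n; induction n. simpl; ring.
  simpl Rsum. rewrite (Rsum_ext _ (fun k => Sg * (R ^ k * Sg ^ (n - 1 - k)))).
  2:{ intros k Hk. replace (n - 0 - k)%nat with (S (n - 1 - k)) by lia. simpl; ring. }
  rewrite Rsum_scal. replace (n - 0 - n)%nat with O by lia.
  replace ((Sg - R) * (Sg * Rsum (fun k => R ^ k * Sg ^ (n - 1 - k)) n + R ^ n * Sg ^ 0))
    with (Sg * ((Sg - R) * Rsum (fun k => R ^ k * Sg ^ (n - 1 - k)) n) + (Sg - R) * R ^ n) by (simpl; ring).
  rewrite IHn. simpl; ring.
Qed.

Lemma finv_bnd : forall a M R, a O = C1 -> bnd a M R -> 0 <= M -> 0 <= R -> bnd (finv a) 1 (R + M * R).
Proof.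
  intros a M R Ha Hb HM HR. set (Sg := R + M * R). set (b := finv a).
  assert (Hab : fmul a b = fone) by (apply finv_spec; auto).
  assert (HS : 0 <= Sg) by (unfold Sg; nra).
  assert (forall n m, (m <= n)%nat -> Cnorm (b m) <= Sg ^ m).
  { induction n; intros m Hm.
    - replace m with O by lia. unfold b; rewrite finv_0, Cnorm_C1. simpl; lra.
    - destruct (Nat.le_gt_cases m n). apply IHn; auto.
      replace m with (S n) by lia.
      assert (E : fmul a b (S n) = C0) by (rewrite Hab; reflexivity).
      unfold fmul in E. rewrite Csum_first, Ha, Nat.sub_0_r in E.
      assert (b (S n) = Copp (Csum (fun k => Cmul (a (S k)) (b (S n - S k)%nat)) (S n))) as ->.
      { transitivity (Csub (Cadd (Cmul C1 (b (S n))) (Csum (fun k => Cmul (a (S k)) (b (S n - S k)%nat)) (S n)))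
                           (Csum (fun k => Cmul (a (S k)) (b (S n - S k)%nat)) (S n))). ring.
        rewrite E. ring. }
      rewrite Cnorm_opp. eapply Rle_trans. apply Cnorm_Csum.
      eapply Rle_trans. apply Rsum_le with (g := fun k => M * R * (R ^ k * Sg ^ (S n - 1 - k))).
      { intros k Hk. rewrite Cnorm_mul.
        apply Rle_trans with ((M * R ^ (S k)) * Sg ^ (S n - 1 - k)).
        apply Rmult_le_compat; auto using Cnorm_ge0. replace (S n - 1 - k)%nat with (S n - S k)%nat by lia.
        apply IHn; lia. simpl; right; ring. }
      rewrite Rsum_scal. replace (M * R) with (Sg - R) by (unfold Sg; ring).
      rewrite geo_diff. assert (0 <= R ^ S n) by (apply pow_le; auto). lra. }
  intros n. rewrite Rmult_1_l. apply (H n n). lia.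
Qed.

Lemma fone_series : forall z, Cseries_to (term fone z) C1.
Proof.
  intros z eps He. exists 1%nat. intros n Hn. destruct n. lia.
  rewrite Csum_first. rewrite Csum_zero by (intros; unfold term, fone; ring).
  unfold term, fone. simpl.
  replace (Csub (Cadd (Cmul C1 C1) C0) C1) with C0 by ring. rewrite Cnorm_C0. lra.
Qed.

Lemma inv_conv : forall a M R z A, a O = C1 -> bnd a M R -> 0 <= M -> 0 <= R ->
  Cnorm z * (R + M * R) <= 1/4 -> Cseries_to (term a z) A ->
  exists B, Cseries_to (term (finv a) z) B /\ Cmul A B = C1.
Proof.
  intros a M R z A Ha Hb HM HR Hz HA.
  assert (HS : 0 <= R + M * R) by nra.
  pose proof (finv_bnd a M R Ha Hb HM HR) as Hb'.
  destruct (Cseries_exists (finv a) 1 (R + M * R) z Hb' ltac:(lra) HS ltac:(lra)) as [B HB].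
  exists B. split; auto.
  assert (Hb2 : bnd a M (R + M * R)) by (apply bnd_mono with R; auto; nra).
  pose proof (prod_conv a (finv a) M 1 (R + M * R) z A B Hb2 Hb' HM ltac:(lra) HS Hz HA HB).
  rewrite finv_spec in H by auto. eapply Cseries_unique; eauto. apply fone_series.
Qed.

Lemma Cseries_shift : forall b s, Cseries_to (fun n => b (S n)) s -> b O = C0 -> Cseries_to b s.
Proof.
  intros b s H H0 eps He. destruct (H eps He) as [N HN]. exists (S N). intros n Hn.
  destruct n. lia. rewrite Csum_first, H0, Cring.(Radd_0_l). apply HN. lia.
Qed.

Lemma Rsum_term_le : forall f N k, (forall j, (j < N)%nat -> 0 <= f j) -> (k < N)%nat -> f k <= Rsum f N.
Proof.
  intros f N k H Hk; induction N. lia. simpl.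
  destruct (Nat.eq_dec k N). subst. pose proof (Rsum_nonneg f N ltac:(intros; apply H; lia)). lra.
  pose proof (IHN ltac:(intros; apply H; lia) ltac:(lia)). pose proof (H N ltac:(lia)). lra.
Qed.

Lemma terms_bounded : forall a s, Cseries_to a s -> exists B, 0 <= B /\ forall n, Cnorm (a n) <= B.
Proof.
  intros a s H. destruct (H 1 ltac:(lra)) as [N HN].
  set (B0 := Rsum (fun k => Cnorm (a k)) N).
  assert (0 <= B0) by (apply Rsum_nonneg; intros; apply Cnorm_ge0).
  exists (2 + B0). split. lra. intros n. destruct (Nat.lt_ge_cases n N).
  - pose proof (Rsum_term_le (fun k => Cnorm (a k)) N n ltac:(intros; apply Cnorm_ge0) H1). fold B0 in H2. lra.
  - replace (a n) with (Csub (Csub (Csum a (S n)) s) (Csub (Csum a n) s)) by (simpl; ring).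
    eapply Rle_trans. apply Cnorm_sub_tri.
    pose proof (HN (S n) ltac:(lia)). pose proof (HN n H1). lra.
Qed.

Lemma Cnorm_inv : forall h, h <> C0 -> Cnorm (Cinv h) = / Cnorm h.
Proof.
  intros h Hh. pose proof (Cnorm_pos h Hh).
  assert (Cnorm (Cinv h) * Cnorm h = 1) by (rewrite <- Cnorm_mul, Cinv_l, Cnorm_C1; auto).
  apply Rmult_eq_reg_r with (Cnorm h); [|lra]. rewrite H0, Rinv_l; lra.
Qed.

Lemma deriv_unique : forall f z l1 l2, Cderiv_at f z l1 -> Cderiv_at f z l2 -> l1 = l2.
Proof.
  intros f z l1 l2 H1 H2. apply Csub_eq0, Cnorm_eq0. apply Rle_antisym; [|apply Cnorm_ge0].
  apply le_eps; intros eps He.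
  destruct (H1 (eps/2) ltac:(lra)) as [d1 [Hd1 K1]]. destruct (H2 (eps/2) ltac:(lra)) as [d2 [Hd2 K2]].
  set (h := RtoC (Rmin d1 d2 / 2)).
  assert (Hh : 0 < Cnorm h /\ Cnorm h < d1 /\ Cnorm h < d2).
  { unfold h. rewrite Cnorm_RtoC. pose proof (Rmin_l d1 d2). pose proof (Rmin_r d1 d2).
    assert (0 < Rmin d1 d2) by (apply Rmin_pos; auto). rewrite Rabs_right by lra. lra. }
  specialize (K1 h ltac:(lra)). specialize (K2 h ltac:(lra)). rewrite Cnorm_sub_sym in K1.
  pose proof (Cnorm_tri3 l1 (Cdiv (Csub (f (Cadd z h)) (f z)) h) l2). lra.
Qed.


Definition Dl (xi h : Cplx) (m : nat) : Cplx := Csub (Cpow (Cadd xi h) m) (Cpow xi m).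
Definition Dd (xi h : Cplx) (n : nat) : Cplx :=
  Csub (Dl xi h (S n)) (Cmul (RtoC (INR (S n))) (Cmul h (Cpow xi n))).

Lemma Dl_bound : forall xi h m, let s := Cnorm xi + Cnorm h in
  s * Cnorm (Dl xi h m) <= INR m * Cnorm h * s ^ m.
Proof.
  intros xi h m s. pose proof (Cnorm_ge0 xi) as Hx. pose proof (Cnorm_ge0 h) as Hy.
  assert (Hs : 0 <= s) by (unfold s; lra).
  induction m.
  - unfold Dl. simpl. replace (Csub C1 C1) with C0 by ring. rewrite Cnorm_C0. lra.
  - assert (E : Dl xi h (S m) = Cadd (Cmul (Cadd xi h) (Dl xi h m)) (Cmul h (Cpow xi m)))
      by (unfold Dl; simpl; ring).
    rewrite E.
    assert (Hxh : Cnorm (Cadd xi h) <= s) by apply Cnorm_tri.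
    assert (Hp : Cnorm xi ^ m <= s ^ m) by (apply pow_incr; unfold s; lra).
    assert (H1 : Cnorm (Cadd (Cmul (Cadd xi h) (Dl xi h m)) (Cmul h (Cpow xi m)))
                 <= Cnorm (Cadd xi h) * Cnorm (Dl xi h m) + Cnorm h * Cnorm xi ^ m).
    { eapply Rle_trans. apply Cnorm_tri. rewrite !Cnorm_mul, Cnorm_pow. lra. }
    pose proof (Cnorm_ge0 (Dl xi h m)). pose proof (Cnorm_ge0 (Cadd xi h)).
    assert (0 <= s ^ m) by (apply pow_le; auto).
    assert (0 <= Cnorm xi ^ m) by (apply pow_le; auto).
    apply Rle_trans with (s * (Cnorm (Cadd xi h) * Cnorm (Dl xi h m) + Cnorm h * Cnorm xi ^ m)).
    apply Rmult_le_compat_l; auto.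
    assert (A1 : s * (Cnorm (Cadd xi h) * Cnorm (Dl xi h m)) <= s * (INR m * Cnorm h * s ^ m)).
    { replace (s * (Cnorm (Cadd xi h) * Cnorm (Dl xi h m))) with
         (Cnorm (Cadd xi h) * (s * Cnorm (Dl xi h m))) by ring.
      apply Rle_trans with (s * (s * Cnorm (Dl xi h m))).
      apply Rmult_le_compat_r; nra. apply Rmult_le_compat_l; auto. }
    assert (A2 : s * (Cnorm h * Cnorm xi ^ m) <= s * (Cnorm h * s ^ m)).
    { apply Rmult_le_compat_l; auto. apply Rmult_le_compat_l; auto. }
    rewrite S_INR. simpl pow. nra.
Qed.

Lemma Dd_bound : forall xi h n, let s := Cnorm xi + Cnorm h in
  s * Cnorm (Dd xi h n) <= INR (S n) * INR (S n) * (Cnorm h * Cnorm h) * s ^ n.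
Proof.
  intros xi h n s. pose proof (Cnorm_ge0 xi) as Hx. pose proof (Cnorm_ge0 h) as Hy.
  assert (Hs : 0 <= s) by (unfold s; lra).
  induction n.
  - unfold Dd, Dl. simpl. replace (Csub (Csub (Cmul (Cadd xi h) C1) (Cmul xi C1)) (Cmul (RtoC 1) (Cmul h C1))) with C0
      by (apply Ceq; simpl; ring).
    rewrite Cnorm_C0. simpl. nra.
  - assert (E : Dd xi h (S n) = Cadd (Cmul xi (Dd xi h n)) (Cmul h (Dl xi h (S n)))).
    { unfold Dd, Dl. rewrite (S_INR (S n)), RtoC_add, RtoC_1, !Cpow_S. ring. }
    rewrite E.
    pose proof (Dl_bound xi h (S n)) as HDl. fold s in HDl.
    pose proof (Cnorm_ge0 (Dd xi h n)). pose proof (Cnorm_ge0 (Dl xi h (S n))).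
    assert (0 <= s ^ n) by (apply pow_le; auto).
    assert (HH1 : s * Cnorm (Cadd (Cmul xi (Dd xi h n)) (Cmul h (Dl xi h (S n))))
                 <= Cnorm xi * (s * Cnorm (Dd xi h n)) + Cnorm h * (s * Cnorm (Dl xi h (S n)))).
    { apply Rle_trans with (s * (Cnorm xi * Cnorm (Dd xi h n) + Cnorm h * Cnorm (Dl xi h (S n)))).
      apply Rmult_le_compat_l; auto. eapply Rle_trans. apply Cnorm_tri. rewrite !Cnorm_mul. lra.
      right; ring. }
    assert (A1 : Cnorm xi * (s * Cnorm (Dd xi h n)) <= s * (INR (S n) * INR (S n) * (Cnorm h * Cnorm h) * s ^ n)).
    { apply Rle_trans with (s * (s * Cnorm (Dd xi h n))).
      apply Rmult_le_compat_r; [nra| unfold s; lra]. apply Rmult_le_compat_l; auto. }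
    assert (A2 : Cnorm h * (s * Cnorm (Dl xi h (S n))) <= Cnorm h * (INR (S n) * Cnorm h * s ^ S n)).
    { apply Rmult_le_compat_l; auto. }
    pose proof (pos_INR (S n)).
    rewrite (S_INR (S n)). simpl pow in *.
    assert (0 <= Cnorm h * Cnorm h * s ^ n * s) by (repeat apply Rmult_le_pos; auto).
    assert (INR (S n) * INR (S n) * (Cnorm h * Cnorm h) * (s * s ^ n) + INR (S n) * Cnorm h * Cnorm h * (s * s ^ n)
        <= (INR (S n) + 1) * (INR (S n) + 1) * (Cnorm h * Cnorm h) * (s * s ^ n)).
    { replace ((INR (S n) + 1) * (INR (S n) + 1) * (Cnorm h * Cnorm h) * (s * s ^ n)) with
        (INR (S n) * INR (S n) * (Cnorm h * Cnorm h) * (s * s ^ n) + INR (S n) * Cnorm h * Cnorm h * (s * s ^ n)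
         + (INR (S n) + 1) * (Cnorm h * Cnorm h * s ^ n * s)) by ring.
      assert (0 <= (INR (S n) + 1) * (Cnorm h * Cnorm h * s ^ n * s)) by (apply Rmult_le_pos; lra).
      lra. }
    lra.
Qed.

Lemma term_identity : forall c xi h n, h <> C0 ->
  Csub (Cmul (Cinv h) (Csub (Cmul (gser c n) (Cpow (Cadd xi h) (S n))) (Cmul (gser c n) (Cpow xi (S n)))))
       (term (fpser c) xi n)
  = Cmul (gser c n) (Cmul (Cinv h) (Dd xi h n)).
Proof.
  intros c xi h n Hh. unfold term, fpser, fderiv, fser, Dd, Dl. field. auto.
Qed.

Lemma deriv_series : forall c f M xi P,
  bnd (gser c) M 2 -> 0 <= M ->
  (forall z, Cnorm z < 1 -> Cseries_to (fun n => Cmul (gser c n) (Cpow z (S n))) (f z)) ->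
  0 < Cnorm xi -> Cnorm xi <= 1/32 ->
  Cseries_to (term (fpser c) xi) P -> Cderiv_at f xi P.
Proof.
  intros c f M xi P Hb HM Hf Hx0 Hx1 HP eps He.
  set (rho := Cnorm xi) in *.
  assert (Hd0 : 0 < eps * rho / (2 * M + 1)) by (apply Rdiv_lt_0_compat; nra).
  exists (Rmin rho (eps * rho / (2 * M + 1))). split. apply Rmin_pos; lra.
  intros h [Hh0 Hhd].
  pose proof (Rmin_l rho (eps * rho / (2 * M + 1))). pose proof (Rmin_r rho (eps * rho / (2 * M + 1))).
  assert (Hh : h <> C0) by (intro E; rewrite E, Cnorm_C0 in Hh0; lra).
  set (y := Cnorm h) in *. set (s := rho + y).
  assert (Hs : 0 < s) by (unfold s; lra). assert (Hs2 : s <= 1/16) by (unfold s; lra).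
  assert (Hz : Cnorm (Cadd xi h) < 1) by (pose proof (Cnorm_tri xi h); fold rho y in H1; lra).
  pose proof (Cseries_sub _ _ _ _ (Hf _ Hz) (Hf xi ltac:(unfold rho in *; lra))) as T3.
  pose proof (Cseries_scale (Cinv h) _ _ T3) as T4.
  pose proof (Cseries_sub _ _ _ _ T4 HP) as T5.
  replace (Csub (Cdiv (Csub (f (Cadd xi h)) (f xi)) h) P) with
    (Csub (Cmul (Cinv h) (Csub (f (Cadd xi h)) (f xi))) P) by (unfold Cdiv; ring).
  assert (Hterm : forall n, s * Cnorm (Cmul (gser c n) (Cmul (Cinv h) (Dd xi h n))) <= M * y * (1/2) ^ n).
  { intros n. rewrite !Cnorm_mul, Cnorm_inv by auto. fold y.
    pose proof (Dd_bound xi h n) as HD. fold rho y s in HD.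
    pose proof (Hb n). pose proof (Cnorm_ge0 (gser c n)). pose proof (Cnorm_ge0 (Dd xi h n)).
    assert (0 < y) by lra.
    assert (E1 : s * (Cnorm (gser c n) * (/ y * Cnorm (Dd xi h n)))
               = Cnorm (gser c n) * / y * (s * Cnorm (Dd xi h n))) by ring.
    rewrite E1.
    assert (0 <= / y) by (apply Rlt_le, Rinv_0_lt_compat; auto).
    apply Rle_trans with ((M * 2 ^ n) * / y * (INR (S n) * INR (S n) * (y * y) * s ^ n)).
    { apply Rmult_le_compat.
      - apply Rmult_le_pos; auto.
      - apply Rmult_le_pos; lra.
      - apply Rmult_le_compat_r; auto.
      - exact HD. }
    assert (E2 : M * 2 ^ n * / y * (INR (S n) * INR (S n) * (y * y) * s ^ n)
               = M * y * (INR (S n) * INR (S n) * (2 * s) ^ n)).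
    { rewrite Rpow_mult_distr. field. lra. }
    rewrite E2. apply Rmult_le_compat_l. apply Rmult_le_pos; lra.
    pose proof (pow4_ge n). assert ((2 * s) ^ n <= (1/8) ^ n) by (apply pow_incr; lra).
    assert (0 <= (2*s)^n) by (apply pow_le; lra).
    apply Rle_trans with (4 ^ n * (1/8) ^ n).
    apply Rmult_le_compat; auto. pose proof (pos_INR (S n)); nra.
    rewrite <- Rpow_mult_distr. right; f_equal; lra. }
  assert (Hsum : forall N, Cnorm (Csum (fun n => Csub (Cmul (Cinv h)
        (Csub (Cmul (gser c n) (Cpow (Cadd xi h) (S n))) (Cmul (gser c n) (Cpow xi (S n)))))
        (term (fpser c) xi n)) N) <= 2 * M * y / s).
  { intros N. rewrite (Csum_ext _ (fun n => Cmul (gser c n) (Cmul (Cinv h) (Dd xi h n))))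
      by (intros; apply term_identity; auto).
    eapply Rle_trans. apply Cnorm_Csum.
    apply Rle_trans with (Rsum (fun n => M * y / s * (1/2) ^ n) N).
    { apply Rsum_le. intros k _. specialize (Hterm k).
      apply Rmult_le_reg_l with s; auto. replace (s * (M * y / s * (1/2)^k)) with (M * y * (1/2)^k)
        by (field; lra). auto. }
    rewrite Rsum_scal. pose proof (geo_sum2 (1/2) N ltac:(lra)).
    assert (0 <= M * y / s) by (unfold Rdiv; apply Rmult_le_pos; [nra | apply Rlt_le, Rinv_0_lt_compat; lra]).
    apply Rle_trans with (M * y / s * 2). apply Rmult_le_compat_l; auto. right; field; lra. }
  pose proof (Cseries_le _ _ _ T5 Hsum).
  eapply Rle_lt_trans. exact H1.
  apply Rle_lt_trans with (2 * M * y / rho).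
  { unfold Rdiv. apply Rmult_le_compat_l. nra. apply Rinv_le_contravar; unfold s; lra. }
  apply Rmult_lt_reg_r with rho. lra. unfold Rdiv. rewrite Rmult_assoc, Rinv_l by lra.
  assert (y * (2 * M + 1) < eps * rho).
  { apply Rmult_lt_reg_r with (/ (2 * M + 1)). apply Rinv_0_lt_compat; lra.
    rewrite Rmult_assoc, Rinv_r by lra. lra. }
  nra.
Qed.


Lemma g_bnd : forall c f,
  (forall z, Cnorm z < 1 -> Cseries_to (fun n => Cmul (gser c n) (Cpow z (S n))) (f z)) ->
  exists M, 1 <= M /\ bnd (gser c) M 2.
Proof.
  intros c f Hf. set (z0 := RtoC (1/2)).
  assert (Hz0 : Cnorm z0 = 1/2) by (unfold z0; rewrite Cnorm_RtoC, Rabs_right; lra).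
  destruct (terms_bounded _ _ (Hf z0 ltac:(lra))) as [B [HB0 HB]].
  exists (2 * B + 1). split. lra. intros n. specialize (HB n).
  rewrite Cnorm_mul, Cnorm_pow, Hz0 in HB.
  assert (E : (1/2) ^ S n * 2 ^ S n = 1) by (rewrite <- Rpow_mult_distr; replace (1/2*2) with 1 by lra; apply pow1).
  assert (0 < 2 ^ S n) by (apply pow_lt; lra).
  pose proof (Cnorm_ge0 (gser c n)).
  assert (Cnorm (gser c n) <= B * 2 ^ S n).
  { replace (Cnorm (gser c n)) with (Cnorm (gser c n) * (1/2) ^ S n * 2 ^ S n)
      by (rewrite Rmult_assoc, E; ring).
    apply Rmult_le_compat_r; lra. }
  simpl pow in H1. assert (0 < 2 ^ n) by (apply pow_lt; lra). nra.
Qed.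

Lemma inv_of_mul : forall a b, Cmul a b = C1 -> a <> C0 /\ b = Cinv a.
Proof.
  intros a b H. assert (a <> C0).
  { intro E. rewrite E in H. assert (C0 = C1) by (rewrite <- H; ring). apply C1_neq_C0; auto. }
  split; auto. transitivity (Cmul (Cinv a) (Cmul a b)). field; auto. rewrite H; ring.
Qed.

Lemma part3 : forall (c : nat -> Cplx) (f fp : Cplx -> Cplx)
  (Hf : forall z, Cnorm z < 1 ->
          Cseries_to (fun n => Cmul (gser c n) (Cpow z (S n))) (f z))
  (Hfp : forall z, Cnorm z < 1 -> Cderiv_at f z (fp z))
  (al : nat -> nat -> Cplx) (Hal : forall p, lam_spec c p (al p)),
  (forall u : Cplx, u <> C0 -> exists r, 0 < r /\
     forall xi, 0 < Cnorm xi < r ->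
       Cseries_to (fun p => Cmul (Lambda p (al p) u) (Cpow xi p))
         (Cmul (Cdiv (Cmul (Cpow xi 2) (Cpow (fp xi) 2)) (Cpow (f xi) 2))
               (Cdiv (Cmul u u) (Csub (f xi) u)))).
Proof.
  intros c f fp Hf Hfp al Hal u Hu.
  destruct (g_bnd c f Hf) as [M [HM1 Hg]].
  set (w := Cinv u). set (W := Cnorm w).
  assert (HW : 0 <= W) by apply Cnorm_ge0.
  assert (Hfpb : bnd (fpser c) M 4).
  { intros n. unfold fpser, fderiv, fser. rewrite Cnorm_mul, Cnorm_RtoC, Rabs_right by (apply Rle_ge, pos_INR).
    pose proof (pow2_ge n). pose proof (Hg n). pose proof (Cnorm_ge0 (gser c n)).
    replace 4 with (2 * 2) by ring. rewrite Rpow_mult_distr.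
    assert (0 <= 2 ^ n) by (apply pow_le; lra).
    apply Rle_trans with (2 ^ n * (M * 2 ^ n)). apply Rmult_le_compat; auto. apply pos_INR.
    right; ring. }
  assert (Hgg : bnd (fmul (gser c) (gser c)) (M * M) (2 * 2)) by (apply prod_bnd; auto; lra).
  set (a2 := fsub fone (fscale w (fser c))).
  assert (Ha2 : bnd a2 (1 + W * M) 2).
  { intros [|n].
    - unfold a2, fsub, fscale. simpl. replace (Csub C1 (Cmul w C0)) with C1 by ring. rewrite Cnorm_C1.
      assert (0 <= W * M) by nra. lra.
    - unfold a2, fsub, fscale, fser, fone. replace (Csub C0 (Cmul w (gser c n))) with (Copp (Cmul w (gser c n))) by ring.
      rewrite Cnorm_opp, Cnorm_mul. fold W. pose proof (Hg n).
      assert (0 <= 2 ^ n) by (apply pow_le; lra). simpl pow.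
      assert (W * Cnorm (gser c n) <= W * (M * 2 ^ n)) by (apply Rmult_le_compat_l; auto).
      assert (0 <= W * M * 2 ^ n) by (repeat apply Rmult_le_pos; lra).
      replace ((1 + W * M) * (2 * 2 ^ n)) with (2 * 2 ^ n + 2 * (W * M * 2 ^ n)) by ring.
      replace (W * (M * 2 ^ n)) with (W * M * 2 ^ n) in * by ring. lra. }
  set (S1 := 2 * 2 + M * M * (2 * 2)). set (S2 := 2 + (1 + W * M) * 2).
  assert (HS1 : 0 <= S1) by (unfold S1; nra). assert (HS2 : 0 <= S2) by (unfold S2; nra).
  set (R0 := 4 + S1 + S2).
  assert (HR0 : 4 <= R0) by (unfold R0; lra).
  exists (1 / (32 * (R0 + 1))). split. apply Rdiv_lt_0_compat; lra.
  intros xi [Hx0 Hxr].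
  set (x := Cnorm xi) in *.
  assert (Hxa : x * (32 * (R0 + 1)) < 1).
  { apply Rmult_lt_reg_r with (/ (32 * (R0 + 1))). apply Rinv_0_lt_compat; lra.
    rewrite Rmult_assoc, Rinv_r by lra. unfold Rdiv in Hxr. lra. }
  assert (HxR : x * R0 <= 1/32) by nra.
  assert (Hx32 : x <= 1/32) by nra.
  assert (Hxpos : 0 <= x) by lra.
  assert (HxS : x * S1 <= 1/32 /\ x * S2 <= 1/32).
  { unfold R0 in HxR. assert (0 <= x * S1) by nra. assert (0 <= x * S2) by nra.
    replace (x * (4 + S1 + S2)) with (4 * x + x * S1 + x * S2) in HxR by ring. lra. }
  destruct HxS as [HxS1 HxS2].
  assert (Hxi0 : xi <> C0) by (intro E; unfold x in Hx0; rewrite E, Cnorm_C0 in Hx0; lra).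
  destruct (Cseries_exists (gser c) M 2 xi Hg ltac:(lra) ltac:(lra) ltac:(fold x; lra)) as [Gv HG].
  assert (Hfx : f xi = Cmul xi Gv).
  { apply (Cseries_unique (fun n => Cmul (gser c n) (Cpow xi (S n)))).
    apply Hf. fold x; lra.
    eapply Cseries_ext; [|apply (Cseries_scale xi _ _ HG)]. intros n. unfold term. rewrite Cpow_S. ring. }
  destruct (Cseries_exists (fpser c) M 4 xi Hfpb ltac:(lra) ltac:(lra) ltac:(fold x; lra)) as [Pv HP].
  assert (Hfpx : fp xi = Pv).
  { apply (deriv_unique f xi). apply Hfp. fold x; lra.
    apply (deriv_series c f M xi Pv Hg ltac:(lra) Hf Hx0 Hx32 HP). }
  pose proof (prod_conv _ _ M M 2 xi Gv Gv Hg Hg ltac:(lra) ltac:(lra) ltac:(lra) ltac:(fold x; lra) HG HG) as HGG.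
  destruct (inv_conv (fmul (gser c) (gser c)) (M * M) (2 * 2) xi (Cmul Gv Gv)
              ltac:(rewrite fmul_0; simpl; ring) Hgg ltac:(nra) ltac:(lra) ltac:(fold x S1; lra) HGG) as [V1 [HV1 EV1]].
  assert (HA2 : Cseries_to (term a2 xi) (Csub C1 (Cmul w (f xi)))).
  { assert (Hfs : Cseries_to (term (fser c) xi) (f xi)).
    { apply Cseries_shift. eapply Cseries_ext; [|apply (Hf xi ltac:(fold x; lra))].
      intros n; reflexivity. unfold term; simpl; ring. }
    eapply Cseries_ext; [|apply (Cseries_sub _ _ _ _ (fone_series xi) (Cseries_scale w _ _ Hfs))].
    intros n. unfold term, a2, fsub, fscale. ring. }
  destruct (inv_conv a2 (1 + W * M) 2 xi _ ltac:(unfold a2, fsub, fscale; simpl; ring)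
              Ha2 ltac:(nra) ltac:(lra) ltac:(fold x S2; lra) HA2) as [Kv [HK EK]].
  assert (HfpR : bnd (fpser c) M R0) by (apply bnd_mono with 4; auto; lra).
  pose proof (prod_conv _ _ M M R0 xi Pv Pv HfpR HfpR ltac:(lra) ltac:(lra) ltac:(lra) ltac:(fold x; lra) HP HP) as H1.
  assert (Hb1 : bnd (fmul (fpser c) (fpser c)) (M * M) (2 * R0)) by (apply prod_bnd; auto; lra).
  assert (Hb2 : bnd (finv (fmul (gser c) (gser c))) 1 (2 * R0)).
  { apply bnd_mono with S1; [apply finv_bnd; [rewrite fmul_0; simpl; ring | exact Hgg | nra | lra] | lra | lra | unfold R0; lra]. }
  pose proof (prod_conv _ _ (M * M) 1 (2 * R0) xi _ _ Hb1 Hb2 ltac:(nra) ltac:(lra) ltac:(lra) ltac:(fold x; lra) H1 HV1) as H2.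
  assert (Hb3 : bnd (fmul (fmul (fpser c) (fpser c)) (finv (fmul (gser c) (gser c)))) (M * M * 1) (2 * (2 * R0)))
    by (apply prod_bnd; auto; nra).
  assert (Hb4 : bnd (finv a2) 1 (2 * (2 * R0))).
  { apply bnd_mono with S2; [apply finv_bnd; [unfold a2, fsub, fscale; simpl; ring | exact Ha2 | nra | lra] | lra | lra | unfold R0; lra]. }
  pose proof (prod_conv _ _ (M * M * 1) 1 (2 * (2 * R0)) xi _ _ Hb3 Hb4 ltac:(nra) ltac:(lra) ltac:(lra) ltac:(fold x; lra) H2 HK) as H3.
  pose proof (Cseries_scale (Copp u) _ _ H3) as H4.
  eapply Cseries_ext with (a := fun p => Cmul (Copp u) (term (fmul (Aser c) (Kser c w)) xi p)).
  { intros p. rewrite (Lambda_AK c p (al p) u (Hal p) Hu). unfold term. fold w. ring. }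
  replace (Cmul (Cdiv (Cmul (Cpow xi 2) (Cpow (fp xi) 2)) (Cpow (f xi) 2)) (Cdiv (Cmul u u) (Csub (f xi) u)))
    with (Cmul (Copp u) (Cmul (Cmul (Cmul Pv Pv) V1) Kv)).
  exact H4.
  destruct (inv_of_mul _ _ EV1) as [HGG0 EV1'].
  destruct (inv_of_mul _ _ EK) as [HD0 EK'].
  rewrite Hfx in HD0, EK'. rewrite EV1', EK', Hfpx, Hfx.
  assert (HG0 : Gv <> C0) by (intro E; apply HGG0; rewrite E; ring).
  assert (Hfu : Csub (Cmul xi Gv) u <> C0).
  { intro E. apply HD0. apply Csub_eq0 in E. rewrite E. unfold w. field. auto. }
  assert (Hfu2 : Csub u (Cmul xi Gv) <> C0) by (intro E; apply Hfu; transitivity (Copp (Csub u (Cmul xi Gv))); [ring| rewrite E; ring]).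
  unfold w in *. simpl Cpow. field. repeat split; auto.
Qed.

Theorem theorem2p1 (c : nat -> Cplx) (f fp : Cplx -> Cplx)
  (Hf : forall z, Cnorm z < 1 ->
          Cseries_to (fun n => Cmul (gser c n) (Cpow z (S n))) (f z))
  (Hfp : forall z, Cnorm z < 1 -> Cderiv_at f z (fp z))
  (Huniv : forall z1 z2, Cnorm z1 < 1 -> Cnorm z2 < 1 -> f z1 = f z2 -> z1 = z2)
  (al : nat -> nat -> Cplx) (Hal : forall p, lam_spec c p (al p)) :
  (forall (p : nat) (w : Cplx), (1 <= p)%nat ->
     Tpoly c (p - 1) w =
     Csum (fun k => Cmul (RtoC (INR (S k)))
                         (Cmul (gser c k) (Fpoly c (p - 1 - k) w))) p) /\
  (forall (p : nat) (u : Cplx), (1 <= p)%nat -> u <> C0 ->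
     Cadd (Lambda p (al p) u) (Cmul (acoef c p) u) = Copp (Tpoly c (p - 1) (Cinv u))) /\
  (forall u : Cplx, u <> C0 -> exists r, 0 < r /\
     forall xi, 0 < Cnorm xi < r ->
       Cseries_to (fun p => Cmul (Lambda p (al p) u) (Cpow xi p))
         (Cmul (Cdiv (Cmul (Cpow xi 2) (Cpow (fp xi) 2)) (Cpow (f xi) 2))
               (Cdiv (Cmul u u) (Csub (f xi) u)))).
Proof.
  split; [|split].
  - intros p w Hp. apply part1; auto.
  - intros p u Hp Hu. apply part2; auto.
  - apply (part3 c f fp Hf Hfp al Hal).
Qed.
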